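(* Let $f,g\in\mathcal D$ with $g\lhd f$. Then $Ig\lhd If$ and $Tg\lhd Tf$.
   Context: $\int f:=\int_0^1f(x)\,dx$. $\mathcal D$: the set of continuous strictly decreasing $f\colon[0,1]\to[0,1]$ with $f(0)=1$, $f(1)=0$; for $f\in\mathcal D$, $f^*=f^{-1}\in\mathcal D$ is its inverse function. $(If)(x):=\frac{\int_x^1f}{\int f}$ and $Tf:=I(f^* )$, i.e. $(Tf)(x)=\frac{\int_x^1f^{-1}}{\int f}$. For $f\in\mathcal D$ and $a>0$, $f_{[a]}\colon[0,\frac1a]\to[0,1]$, $x\mapsto f(ax)$; for $b>0$, $f_{[a]}-bg$ is considered on $[0,\min\{1,\frac1a\}]$. Sign switches: for a continuous $\Delta\colon[c_0,d_0]\to\mathbb R$, a closed subinterval $[c,d]$ with $c_0<c\le d<d_0$ and $\Delta([c,d])=\{0\}$ is a sign switch if there is $\delta\in(0,\min\{c-c_0,d_0-d\}]$ with $\Delta(c-x)\Delta(d+x)<0$ for all $x\in(0,\delta]$; $\chi\Delta$ is the number of sign switches. Crossing number: $\chi(f,g):=\sup\{\chi(f_{[a]}-bg): a,b>0\}$. Domination: $g\lhd f$ means $\chi(f,g)=2$ and $g\le f$ pointwise. *)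

(* Defs.v *)
From Stdlib Require Import Reals Lra List ClassicalEpsilon.
From Coquelicot Require Import Coquelicot.
Open Scope R_scope.

Definition cont01 (f : R -> R) : Prop :=
  forall x, 0 <= x <= 1 -> forall eps, 0 < eps ->
    exists delta, 0 < delta /\
      forall y, 0 <= y <= 1 -> Rabs (y - x) < delta -> Rabs (f y - f x) < eps.

Definition inD (f : R -> R) : Prop :=
  cont01 f /\
  (forall x, 0 <= x <= 1 -> 0 <= f x <= 1) /\
  (forall x y, 0 <= x -> x < y -> y <= 1 -> f y < f x) /\
  f 0 = 1 /\ f 1 = 0.

Definition int01 (f : R -> R) : R := RInt f 0 1.

(* inverse function f^star on [0,1] (chosen by epsilon; for f in D it is the
   unique x in [0,1] with f x = y) *)
Definition finv (f : R -> R) (y : R) : R :=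
  epsilon (inhabits 0) (fun x => 0 <= x <= 1 /\ f x = y).

Definition Iop (f : R -> R) (x : R) : R := RInt f x 1 / int01 f.

(* T f = I (f^star) ; note int f^star = int f for f in D, but we follow the definition
   T f := I (f^star) literally *)
Definition Top (f : R -> R) : R -> R := Iop (finv f).

Definition sign_switch (Delta : R -> R) (c0 d0 c d : R) : Prop :=
  c0 < c /\ c <= d /\ d < d0 /\
  (forall x, c <= x <= d -> Delta x = 0) /\
  exists delta, 0 < delta /\ delta <= Rmin (c - c0) (d0 - d) /\
    forall x, 0 < x <= delta -> Delta (c - x) * Delta (d + x) < 0.

Definition chi_ge (Delta : R -> R) (c0 d0 : R) (n : nat) : Prop :=
  exists l : list (R * R)%type, List.NoDup l /\ List.length l = n /\
    List.Forall (fun p => sign_switch Delta c0 d0 (fst p) (snd p)) l.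

Definition chi (Delta : R -> R) (c0 d0 : R) : Rbar :=
  Rbar_lub (fun r => exists n : nat, r = Finite (INR n) /\ chi_ge Delta c0 d0 n).

Definition crossing (f g : R -> R) : Rbar :=
  Rbar_lub (fun r => exists a b, 0 < a /\ 0 < b /\
    r = chi (fun x => f (a * x) - b * g x) 0 (Rmin 1 (/ a))).

Definition dominated (g f : R -> R) : Prop :=
  crossing f g = Finite 2 /\ forall x, 0 <= x <= 1 -> g x <= f x.

(* Main.v *)
Require Import Defs.
From Stdlib Require Import Reals.
From Coquelicot Require Import Coquelicot.
From Stdlib Require Import Lra List ClassicalEpsilon Classical Lia Sorting ZArith.
From Stdlib Require Cantor.
Open Scope R_scope.

Definition contI (phi : R -> R) (l r : R) : Prop :=
  forall x, l <= x <= r -> forall eps, 0 < eps -> exists delta, 0 < delta /\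
    forall y, l <= y <= r -> Rabs (y - x) < delta -> Rabs (phi y - phi x) < eps.

Definition clamp (l r x : R) := Rmax l (Rmin r x).

Lemma clamp_in l r x : l <= r -> l <= clamp l r x <= r.
Proof. intros; unfold clamp, Rmax, Rmin; repeat destruct Rle_dec; lra. Qed.

Lemma clamp_id l r x : l <= x <= r -> clamp l r x = x.
Proof. intros; unfold clamp, Rmax, Rmin; repeat destruct Rle_dec; lra. Qed.

Lemma clamp_lip l r x y : l <= r -> Rabs (clamp l r y - clamp l r x) <= Rabs (y - x).
Proof.
  intros; unfold clamp, Rmax, Rmin; repeat destruct Rle_dec;
  unfold Rabs; repeat destruct Rcase_abs; lra.
Qed.

Lemma contI_clamp phi l r : l <= r -> contI phi l r ->
  continuity (fun x => phi (clamp l r x)).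
Proof.
  intros Hlr Hc x. unfold continuity_pt, continue_in, limit1_in, limit_in.
  intros eps Heps. destruct (Hc (clamp l r x) (clamp_in l r x Hlr) eps Heps) as [d [Hd H]].
  exists d; split; [lra|]. intros y [_ Hy]. simpl in *. unfold R_dist in *.
  apply H. apply clamp_in; lra. eapply Rle_lt_trans; [apply clamp_lip; lra| exact Hy].
Qed.

Lemma contI_sub phi l r l' r' : contI phi l r -> l <= l' -> r' <= r -> contI phi l' r'.
Proof.
  intros H H1 H2 x Hx eps He. destruct (H x ltac:(lra) eps He) as [d [Hd Hd']].
  exists d; split; auto. intros y Hy; apply Hd'; lra.
Qed.

Lemma contI_opp phi l r : contI phi l r -> contI (fun x => - phi x) l r.
Proof.
  intros H x Hx eps He. destruct (H x Hx eps He) as [d [Hd Hd']].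
  exists d; split; auto. intros y Hy Hxy. specialize (Hd' y Hy Hxy).
  replace (- phi y - - phi x) with (- (phi y - phi x)) by ring. rewrite Rabs_Ropp; auto.
Qed.

Lemma contI_lin phi psi k l r : contI phi l r -> contI psi l r ->
  contI (fun x => phi x - k * psi x) l r.
Proof.
  intros H1 H2 x Hx eps He.
  destruct (H1 x Hx (eps/2) ltac:(lra)) as [d1 [Hd1 Hd1']].
  destruct (H2 x Hx (eps/2/(Rabs k + 1))) as [d2 [Hd2 Hd2']].
  { apply Rdiv_lt_0_compat; [lra| pose proof (Rabs_pos k); lra]. }
  exists (Rmin d1 d2); split; [apply Rmin_pos; auto|].
  intros y Hy Hxy.
  assert (A1 := Hd1' y Hy ltac:(pose proof (Rmin_l d1 d2); lra)).
  assert (A2 := Hd2' y Hy ltac:(pose proof (Rmin_r d1 d2); lra)).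
  replace (phi y - k * psi y - (phi x - k * psi x)) with ((phi y - phi x) - k * (psi y - psi x)) by ring.
  eapply Rle_lt_trans; [apply Rabs_triang|]. rewrite Rabs_Ropp, Rabs_mult.
  assert (Rabs k * Rabs (psi y - psi x) <= (Rabs k + 1) * Rabs (psi y - psi x)).
  { apply Rmult_le_compat_r; [apply Rabs_pos| lra]. }
  assert ((Rabs k + 1) * Rabs (psi y - psi x) < eps / 2).
  { pose proof (Rabs_pos k).
    apply Rmult_lt_compat_l with (r := Rabs k + 1) in A2; [|lra].
    field_simplify in A2; lra. }
  lra.
Qed.

Lemma contI_scale phi a l r : 0 < a -> contI phi (a*l) (a*r) -> contI (fun x => phi (a * x)) l r.
Proof.
  intros Ha H x Hx eps He.
  destruct (H (a*x) ltac:(split; apply Rmult_le_compat_l; lra) eps He) as [d [Hd Hd']].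
  exists (d / a); split; [apply Rdiv_lt_0_compat; lra|].
  intros y Hy Hxy. apply Hd'. split; apply Rmult_le_compat_l; lra.
  replace (a*y - a*x) with (a * (y - x)) by ring. rewrite Rabs_mult, (Rabs_right a) by lra.
  apply Rmult_lt_compat_l with (r := a) in Hxy; [|lra]. field_simplify in Hxy; lra.
Qed.

Lemma ivt_up phi l r : l < r -> contI phi l r -> phi l < 0 -> 0 < phi r ->
  exists z, l < z < r /\ phi z = 0.
Proof.
  intros Hlr Hc H1 H2.
  destruct (IVT (fun x => phi (clamp l r x)) l r (contI_clamp phi l r ltac:(lra) Hc) Hlr)
    as [z [Hz Hz']].
  - rewrite clamp_id; lra.
  - rewrite clamp_id; lra.
  - rewrite clamp_id in Hz' by lra. exists z. split; auto.
    destruct (Req_dec z l); [subst; lra|]. destruct (Req_dec z r); [subst; lra|]. lra.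
Qed.

Lemma ivt_down phi l r : l < r -> contI phi l r -> 0 < phi l -> phi r < 0 ->
  exists z, l < z < r /\ phi z = 0.
Proof.
  intros Hlr Hc H1 H2. destruct (ivt_up (fun x => - phi x) l r Hlr (contI_opp _ _ _ Hc))
    as [z [Hz Hz']]; try lra. exists z; split; auto; lra.
Qed.

Lemma first_zero phi u v : u < v -> contI phi u v -> 0 < phi u -> phi v < 0 ->
  exists z, u < z < v /\ phi z = 0 /\ forall y, u <= y < z -> 0 < phi y.
Proof.
  intros Huv Hc Hu Hv.
  set (S := fun x => u <= x <= v /\ forall y, u <= y <= x -> 0 < phi y).
  assert (HS : exists x, S x). { exists u; split; [lra|]. intros y Hy; replace y with u by lra; auto. }
  assert (HB : bound S). { exists v; intros x [Hx _]; lra. }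
  destruct (completeness S HB HS) as [z [Hz1 Hz2]].
  assert (Huz : u <= z) by (apply Hz1; split; [lra|]; intros y Hy; replace y with u by lra; auto).
  assert (Hzv : z <= v) by (apply Hz2; intros x [Hx _]; lra).
  assert (Hbelow : forall y, u <= y < z -> 0 < phi y).
  { intros y Hy. destruct (classic (exists x, S x /\ y < x)) as [[x [[_ Hx] Hyx]]|Hn].
    - apply Hx; lra.
    - exfalso. assert (z <= y); [|lra]. apply Hz2. intros x Hx.
      destruct (Rle_dec x y); auto. exfalso; apply Hn; exists x; split; auto; lra. }
  destruct (Rtotal_order (phi z) 0) as [Hneg|[Hzero|Hpos]].
  -
    exfalso. assert (Hzu : u < z) by (destruct (Req_dec u z); [subst; lra| lra]).
    destruct (Hc z ltac:(lra) (- phi z) ltac:(lra)) as [d [Hd Hd']].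
    set (y := Rmax u (z - d/2)).
    assert (Hy : u <= y < z) by (unfold y, Rmax; destruct Rle_dec; lra).
    specialize (Hbelow y Hy). specialize (Hd' y ltac:(lra)).
    assert (Rabs (y - z) < d) by (unfold y, Rmax in *; destruct Rle_dec; unfold Rabs; destruct Rcase_abs; lra).
    specialize (Hd' H). apply Rabs_def2 in Hd'. lra.
  - exists z. assert (u <> z) by (intro; subst; lra). assert (z <> v) by (intro; subst; lra).
    split; [lra|]. split; auto.
  - exfalso. assert (Hzv' : z < v) by (destruct (Req_dec z v); [subst; lra|lra]).
    destruct (Hc z ltac:(lra) (phi z) Hpos) as [d [Hd Hd']].
    set (x := Rmin v (z + d/2)).
    assert (Hx : z < x <= v) by (unfold x, Rmin; destruct Rle_dec; lra).
    assert (S x).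
    { split; [lra|]. intros y Hy. destruct (Rlt_le_dec y z). apply Hbelow; lra.
      specialize (Hd' y ltac:(lra)).
      assert (Rabs (y - z) < d) by (unfold x, Rmin in *; destruct Rle_dec; unfold Rabs; destruct Rcase_abs; lra).
      specialize (Hd' H). apply Rabs_def2 in Hd'. lra. }
    specialize (Hz1 x H). lra.
Qed.

Definition zlist (phi : R -> R) (u v : R) (zs : list R) :=
  List.Forall (fun z => u <= z <= v /\ phi z = 0) zs /\ StronglySorted Rlt zs.

Lemma zlist_many phi u v z : z < v ->
  (forall x, z < x < v -> phi x <= 0) ->
  (forall eta, 0 < eta -> exists x, 0 < x <= eta /\ 0 <= phi (z + x)) ->
  u <= z ->
  forall k, exists zs, zlist phi u v zs /\ length zs = k.
Proof.
  intros Hzv Hle Hacc Huz k.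
  assert (forall k, exists zs m, zlist phi u v zs /\ length zs = k /\ z < m <= v /\
            List.Forall (fun w => m <= w) zs).
  { induction k0.
    - exists nil, v. repeat split; auto; try constructor; lra.
    - destruct IHk0 as [zs [m [[HF HS] [Hl [Hm HFm]]]]].
      destruct (Hacc ((m - z)/2) ltac:(lra)) as [x [Hx Hpx]].
      assert (Hp0 : phi (z + x) = 0) by (specialize (Hle (z+x) ltac:(lra)); lra).
      exists ((z+x) :: zs), (z + x). split; [split|].
      + constructor; auto. split; [lra|auto].
      + constructor; auto. eapply List.Forall_impl; [|exact HFm]. simpl; intros; lra.
      + simpl. split; [lia|]. split; [lra|]. constructor; [lra|].
        eapply List.Forall_impl; [|exact HFm]. simpl; intros; lra. }
  destruct (H k) as [zs [m [H1 [H2 _]]]]. exists zs; auto.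
Qed.

Lemma CL : forall N u v phi, u < v -> contI phi u v -> 0 < phi u -> phi v < 0 ->
  (forall zs, zlist phi u v zs -> (length zs <= N)%nat) ->
  exists z eta, u < z < v /\ phi z = 0 /\ 0 < eta /\
    forall x, 0 < x <= eta -> 0 < phi (z - x) /\ phi (z + x) < 0.
Proof.
  induction N; intros u v phi Huv Hc Hu Hv Hb;
  destruct (first_zero phi u v Huv Hc Hu Hv) as [z [Hz [Hz0 Hzl]]].
  - exfalso. assert (zlist phi u v (z :: nil)).
    { split; repeat constructor; lra || auto. }
    specialize (Hb _ H). simpl in Hb. lia.
  - destruct (classic (exists eta, 0 < eta /\ forall x, 0 < x <= eta -> phi (z + x) < 0))
      as [[eta [He Heta]]|HA].
    + exists z, (Rmin eta (z - u)). split; auto. split; auto. split.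
      { apply Rmin_pos; lra. }
      intros x Hx. pose proof (Rmin_l eta (z-u)). pose proof (Rmin_r eta (z-u)).
      split. apply Hzl; lra. apply Heta; lra.
    + destruct (classic (exists x, z < x < v /\ 0 < phi x)) as [[x [Hx Hpx]]|HB].
      * destruct (IHN x v phi ltac:(lra) (contI_sub phi u v x v Hc ltac:(lra) ltac:(lra)) Hpx Hv)
          as [z' [eta [Hz' Hrest]]].
        { intros zs [HF HS]. assert (zlist phi u v (z :: zs)).
          { split. constructor. split; [lra|auto].
            eapply List.Forall_impl; [|exact HF]. simpl; intros; split; [lra|tauto].
            constructor; auto. eapply List.Forall_impl; [|exact HF]. simpl; intros; lra. }
          specialize (Hb _ H). simpl in Hb. lia. }
        exists z', eta. split; [lra|auto].
      * exfalso.
        assert (Hle : forall x, z < x < v -> phi x <= 0).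
        { intros x Hx. destruct (Rle_dec (phi x) 0); auto. exfalso; apply HB; exists x; split; auto; lra. }
        assert (Hacc : forall eta, 0 < eta -> exists x, 0 < x <= eta /\ 0 <= phi (z + x)).
        { intros eta He. apply NNPP. intro Hn. apply HA. exists eta; split; auto.
          intros x Hx. destruct (Rlt_le_dec (phi (z+x)) 0); auto. exfalso; apply Hn; exists x; split; auto. }
        destruct (zlist_many phi u v z ltac:(lra) Hle Hacc ltac:(lra) (S (S N))) as [zs [H1 H2]].
        specialize (Hb _ H1). lia.
Qed.

Definition lenI (a b c e : R) : R := Rmax 0 (Rmin b e - Rmax a c).

Lemma lenI_nonneg a b c e : 0 <= lenI a b c e.
Proof. unfold lenI; apply Rmax_l. Qed.

Lemma lenI_add a b c m e : c <= m <= e -> lenI a b c e = lenI a b c m + lenI a b m e.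
Proof. intros; unfold lenI, Rmax, Rmin; repeat destruct Rle_dec; lra. Qed.

Lemma lenI_ref a b a1 b1 a2 b2 c e : a1 <= b1 -> a2 <= b2 -> Rmax a1 a2 <= Rmin b1 b2 ->
  Rmin a1 a2 <= a -> b <= Rmax b1 b2 -> lenI a b c e <= lenI a1 b1 c e + lenI a2 b2 c e.
Proof. intros; unfold lenI, Rmax, Rmin in *; repeat destruct Rle_dec; lra. Qed.

Lemma lenI_le a b c e : a <= b -> lenI a b c e <= b - a.
Proof. intros; unfold lenI, Rmax, Rmin; repeat destruct Rle_dec; lra. Qed.

Lemma lenI_full a b c e : a <= c -> c <= e -> e <= b -> lenI a b c e = e - c.
Proof. intros; unfold lenI, Rmax, Rmin; repeat destruct Rle_dec; lra. Qed.

Lemma lenI_pt a b c : lenI a b c c = 0.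
Proof. unfold lenI, Rmax, Rmin; repeat destruct Rle_dec; lra. Qed.

Fixpoint sumr (lo n : nat) (f : nat -> R) : R :=
  match n with O => 0 | S n' => f lo + sumr (S lo) n' f end.

Lemma sumr_ext lo n f g : (forall j, (lo <= j < lo + n)%nat -> f j = g j) -> sumr lo n f = sumr lo n g.
Proof.
  revert lo; induction n; intros lo H; simpl; auto.
  rewrite H by lia. f_equal. apply IHn. intros; apply H; lia.
Qed.

Lemma sumr_le lo n f g : (forall j, (lo <= j < lo + n)%nat -> f j <= g j) -> sumr lo n f <= sumr lo n g.
Proof.
  revert lo; induction n; intros lo H; simpl; [lra|].
  assert (f lo <= g lo) by (apply H; lia).
  assert (sumr (S lo) n f <= sumr (S lo) n g) by (apply IHn; intros; apply H; lia). lra.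
Qed.

Lemma sumr_plus lo n f g : sumr lo n (fun j => f j + g j) = sumr lo n f + sumr lo n g.
Proof. revert lo; induction n; intros; simpl; [lra|]. rewrite IHn; lra. Qed.

Lemma sumr_nonneg lo n f : (forall j, 0 <= f j) -> 0 <= sumr lo n f.
Proof. revert lo; induction n; intros; simpl; [lra|]. specialize (IHn (S lo) H). specialize (H lo). lra. Qed.

Lemma sumr_zero lo n : sumr lo n (fun _ => 0) = 0.
Proof. revert lo; induction n; intros; simpl; [lra|]. rewrite IHn; lra. Qed.

Lemma sumr_tele lo n (f : nat -> R) : sumr lo n (fun j => f (S j) - f j) = f (lo + n)%nat - f lo.
Proof.
  revert lo; induction n; intros; simpl. rewrite Nat.add_0_r; lra.
  rewrite IHn. replace (S lo + n)%nat with (lo + S n)%nat by lia. lra.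
Qed.

Lemma sumr_pair lo m g : sumr (2*lo) (2*m) g = sumr lo m (fun j => g (2*j)%nat + g (S (2*j))).
Proof.
  revert lo; induction m; intros. simpl. replace (2*0)%nat with 0%nat by lia. reflexivity.
  replace (2 * S m)%nat with (S (S (2*m))) by lia. simpl.
  specialize (IHm (S lo)). replace (2 * S lo)%nat with (S (S (2*lo))) in IHm by lia. simpl in IHm.
  rewrite IHm. lra.
Qed.

Definition suml (f : nat -> R) (l : list nat) : R := fold_right (fun j acc => f j + acc) 0 l.

Lemma suml_le_sumr : forall n lo l f, (forall j, 0 <= f j) -> StronglySorted lt l ->
  List.Forall (fun j => lo <= j < lo + n)%nat l -> suml f l <= sumr lo n f.
Proof.
  induction n; intros lo l f Hf Hs HF.
  - destruct l; simpl; [lra|]. inversion HF; subst. lia.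
  - simpl. destruct l as [|j l]; simpl.
    + pose proof (sumr_nonneg (S lo) n f Hf). specialize (Hf lo). lra.
    + apply StronglySorted_inv in Hs. destruct Hs as [Hs Hj]. inversion HF; subst.
      destruct (Nat.eq_dec j lo).
      * subst. assert (suml f l <= sumr (S lo) n f); [|lra].
        apply IHn; auto. apply List.Forall_forall. intros x Hx.
        rewrite List.Forall_forall in Hj, H2. specialize (Hj x Hx). specialize (H2 x Hx). lia.
      * assert (f j + suml f l <= sumr (S lo) n f); [|specialize (Hf lo); lra].
        change (f j + suml f l) with (suml f (j :: l)).
        rewrite List.Forall_forall in Hj, H2.
        apply IHn; auto.
        { constructor; auto. apply List.Forall_forall. auto. }
        { constructor; [lia|]. apply List.Forall_forall. intros x Hx.
          specialize (Hj x Hx). specialize (H2 x Hx). lia. }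
Qed.

Lemma suml_const f l K : List.Forall (fun j => f j = K) l -> suml f l = INR (length l) * K.
Proof.
  induction l; intros H. simpl; lra. inversion H; subst.
  change (suml f (a :: l)) with (f a + suml f l). rewrite IHl by auto.
  change (length (a :: l)) with (S (length l)). rewrite S_INR. lra.
Qed.

Lemma INR_le_pow2 n : INR n <= 2 ^ n.
Proof. induction n. simpl; lra. rewrite S_INR. simpl. assert (1 <= 2^n) by (apply pow_R1_Rle; lra). lra. Qed.

Lemma mesh_small (L t : R) : 0 < t -> exists n, L / 2 ^ n < t.
Proof.
  intros Ht. destruct (archimed (L / t)) as [H1 _].
  destruct (Rle_dec (L/t) 0).
  - exists O. simpl. destruct (Rle_dec L 0). lra.
    exfalso. assert (0 < L / t) by (apply Rdiv_lt_0_compat; lra). lra.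
  - assert (0 <= IZR (up (L/t))) by lra. apply le_IZR in H.
    exists (Z.to_nat (up (L/t))).
    assert (HI : INR (Z.to_nat (up (L / t))) = IZR (up (L/t))) by (rewrite INR_IZR_INZ; rewrite Z2Nat.id; auto).
    pose proof (INR_le_pow2 (Z.to_nat (up (L / t)))). rewrite HI in H0.
    assert (0 < 2 ^ Z.to_nat (up (L / t))) by (apply pow_lt; lra).
    assert (L / t < 2 ^ Z.to_nat (up (L / t))) by lra.
    assert (L < t * 2 ^ Z.to_nat (up (L / t))).
    { apply Rmult_lt_compat_l with (r := t) in H3; auto. field_simplify in H3; lra. }
    apply Rmult_lt_reg_r with (r := 2 ^ Z.to_nat (up (L / t))); auto. field_simplify; lra.
Qed.

Lemma mesh_anti (L : R) n m : 0 <= L -> (n <= m)%nat -> L / 2 ^ m <= L / 2 ^ n.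
Proof.
  intros HL Hnm. assert (0 < 2^n) by (apply pow_lt; lra).
  assert (2^n <= 2^m) by (apply Rle_pow; [lra|lia]).
  unfold Rdiv. apply Rmult_le_compat_l; auto. apply Rinv_le_contravar; auto.
Qed.

Lemma nat_above (x : R) : exists N : nat, x <= INR N.
Proof.
  destruct (archimed x) as [H1 _]. destruct (Rle_dec x 0).
  - exists O; simpl; lra.
  - assert (0 <= IZR (up x)) by lra. apply le_IZR in H. exists (Z.to_nat (up x)).
    rewrite INR_IZR_INZ, Z2Nat.id by lia; lra.
Qed.

Lemma nested (Inv : nat -> R -> R -> Prop) (Step : nat -> R -> R -> R -> R -> Prop) a0 b0 :
  Inv O a0 b0 ->
  (forall s a b, Inv s a b -> exists a' b', Inv (S s) a' b' /\ Step s a b a' b') ->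
  exists A B : nat -> R, forall s, Inv s (A s) (B s) /\ Step s (A s) (B s) (A (S s)) (B (S s)).
Proof.
  intros H0 HS.
  set (nxt := fun s (ab : R * R) => epsilon (inhabits (0,0)) (fun ab' : R*R =>
           Inv (S s) (fst ab') (snd ab') /\ Step s (fst ab) (snd ab) (fst ab') (snd ab'))).
  assert (Hn : forall s ab, Inv s (fst ab) (snd ab) ->
     Inv (S s) (fst (nxt s ab)) (snd (nxt s ab)) /\ Step s (fst ab) (snd ab) (fst (nxt s ab)) (snd (nxt s ab))).
  { intros s ab H. destruct (HS s _ _ H) as [a' [b' H']]. unfold nxt.
    apply (epsilon_spec (inhabits (0,0)) (fun ab' : R*R =>
           Inv (S s) (fst ab') (snd ab') /\ Step s (fst ab) (snd ab) (fst ab') (snd ab'))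
           (ex_intro _ (a',b') H')). }
  set (seqf := fix seqf (s : nat) : R * R := match s with O => (a0, b0) | S s' => nxt s' (seqf s') end).
  assert (HI : forall s, Inv s (fst (seqf s)) (snd (seqf s))).
  { induction s. simpl; auto. change (seqf (S s)) with (nxt s (seqf s)). apply Hn; auto. }
  exists (fun s => fst (seqf s)), (fun s => snd (seqf s)). intros s. split; auto.
  change (seqf (S s)) with (nxt s (seqf s)). apply Hn; auto.
Qed.

Lemma SS_impl (R1 R2 : R -> R -> Prop) l : (forall x y, R1 x y -> R2 x y) -> StronglySorted R1 l -> StronglySorted R2 l.
Proof.
  intros H; induction 1; constructor; auto. eapply List.Forall_impl; [|eauto]. auto.
Qed.

Lemma gap_exists (L : R) zs : 0 <= L -> StronglySorted Rlt zs ->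
  exists n, StronglySorted (fun x y => L / 2 ^ n < y - x) zs.
Proof.
  intros HL. induction 1.
  - exists O; constructor.
  - destruct IHStronglySorted as [n1 Hn1].
    assert (exists n2, List.Forall (fun y => L / 2 ^ n2 < y - a) l).
    { clear -H0 HL. induction H0. exists O; constructor.
      destruct IHForall as [m Hm]. destruct (mesh_small L (x - a) ltac:(lra)) as [k Hk].
      exists (m + k)%nat. constructor.
      - pose proof (mesh_anti L k (m+k)%nat HL ltac:(lia)). lra.
      - eapply List.Forall_impl; [|exact Hm]. simpl. intros y Hy. pose proof (mesh_anti L m (m+k)%nat HL ltac:(lia)). lra. }
    destruct H1 as [n2 Hn2]. exists (n1 + n2)%nat. constructor.
    + eapply SS_impl; [|exact Hn1]. simpl. intros x y Hxy. pose proof (mesh_anti L n1 (n1+n2)%nat HL ltac:(lia)). lra.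
    + eapply List.Forall_impl; [|exact Hn2]. simpl. intros y Hy. pose proof (mesh_anti L n2 (n1+n2)%nat HL ltac:(lia)). lra.
Qed.

Lemma pow_le1 (x : R) s : 0 <= x <= 1 -> x ^ s <= 1.
Proof.
  intros H; induction s; simpl; [lra|].
  assert (0 <= x ^ s) by (apply pow_le; lra). nra.
Qed.

Definition supf (phi : R -> R) (l r : R) : R :=
  epsilon (inhabits 0) (fun m => is_lub (fun y => exists x, l <= x <= r /\ y = phi x) m).

Lemma supf_spec phi l r : l <= r -> (exists B, forall x, l <= x <= r -> phi x <= B) ->
  is_lub (fun y => exists x, l <= x <= r /\ y = phi x) (supf phi l r).
Proof.
  intros Hlr [B HB].
  assert (Hb : bound (fun y => exists x, l <= x <= r /\ y = phi x)).
  { exists B. intros y [x [Hx ->]]. auto. }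
  assert (He : exists y, (fun y => exists x, l <= x <= r /\ y = phi x) y).
  { exists (phi l), l. split; auto; lra. }
  destruct (completeness _ Hb He) as [m Hm].
  unfold supf. apply (epsilon_spec (inhabits 0) (fun m => is_lub (fun y => exists x, l <= x <= r /\ y = phi x) m)).
  exists m; auto.
Qed.

Section Meas.
Variables (h P : R -> R) (p q : R).
Hypothesis Hpq : p < q.
Hypothesis Hvar : forall s t, p <= s -> s <= t -> t <= q -> Rabs (h t - h s) <= P t - P s.

Lemma P_mono s t : p <= s -> s <= t -> t <= q -> P s <= P t.
Proof. intros. pose proof (Hvar s t H H0 H1). pose proof (Rabs_pos (h t - h s)). lra. Qed.

Lemma h_bound l r : p <= l -> l <= r -> r <= q -> forall x y, l <= x <= r -> l <= y <= r ->
  h x - h y <= P r - P l.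
Proof.
  intros Hl Hlr Hr x y Hx Hy.
  assert (P l <= P (Rmin x y)) by (apply (P_mono l (Rmin x y)); unfold Rmin; repeat destruct Rle_dec; lra).
  assert (P (Rmax x y) <= P r) by (apply (P_mono (Rmax x y) r); unfold Rmax; repeat destruct Rle_dec; lra).
  destruct (Rle_dec x y).
  - pose proof (Hvar x y ltac:(lra) r0 ltac:(lra)).
    assert (h x - h y <= Rabs (h y - h x)) by (rewrite Rabs_minus_sym; apply Rle_abs).
    unfold Rmin, Rmax in *; repeat destruct Rle_dec; lra.
  - pose proof (Hvar y x ltac:(lra) ltac:(lra) ltac:(lra)).
    assert (h x - h y <= Rabs (h x - h y)) by (apply Rle_abs).
    unfold Rmin, Rmax in *; repeat destruct Rle_dec; lra.
Qed.

Definition ma l r := supf h l r.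
Definition mi l r := - supf (fun x => - h x) l r.

Lemma ma_spec l r : p <= l -> l <= r -> r <= q ->
  is_lub (fun y => exists x, l <= x <= r /\ y = h x) (ma l r).
Proof.
  intros. apply supf_spec; auto. exists (h l + (P r - P l)). intros x Hx.
  pose proof (h_bound l r H H0 H1 x l Hx ltac:(lra)). lra.
Qed.

Lemma mi_spec l r : p <= l -> l <= r -> r <= q ->
  is_lub (fun y => exists x, l <= x <= r /\ y = - h x) (- mi l r).
Proof.
  intros. unfold mi. rewrite Ropp_involutive. apply supf_spec; auto. exists (- h l + (P r - P l)). intros x Hx.
  pose proof (h_bound l r H H0 H1 l x ltac:(lra) Hx). lra.
Qed.

Lemma ma_ge l r x : p <= l -> l <= r -> r <= q -> l <= x <= r -> h x <= ma l r.
Proof. intros. destruct (ma_spec l r H H0 H1) as [H3 _]. apply H3. exists x; auto. Qed.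

Lemma ma_le l r B : p <= l -> l <= r -> r <= q -> (forall x, l <= x <= r -> h x <= B) -> ma l r <= B.
Proof. intros. destruct (ma_spec l r H H0 H1) as [_ H3]. apply H3. intros y [x [Hx ->]]. auto. Qed.

Lemma mi_le l r x : p <= l -> l <= r -> r <= q -> l <= x <= r -> mi l r <= h x.
Proof. intros. destruct (mi_spec l r H H0 H1) as [H3 _]. assert (- h x <= - mi l r); [|lra]. apply H3. exists x; auto. Qed.

Lemma mi_ge l r B : p <= l -> l <= r -> r <= q -> (forall x, l <= x <= r -> B <= h x) -> B <= mi l r.
Proof.
  intros. destruct (mi_spec l r H H0 H1) as [_ H3]. assert (- mi l r <= - B); [|lra].
  apply H3. intros y [x [Hx ->]]. specialize (H2 x Hx). lra.
Qed.

Lemma mi_le_ma l r : p <= l -> l <= r -> r <= q -> mi l r <= ma l r.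
Proof. intros. pose proof (mi_le l r l H H0 H1 ltac:(lra)). pose proof (ma_ge l r l H H0 H1 ltac:(lra)). lra. Qed.

Lemma ma_mi l r : p <= l -> l <= r -> r <= q -> ma l r - mi l r <= P r - P l.
Proof.
  intros.
  assert (forall y, l <= y <= r -> ma l r - (P r - P l) <= h y).
  { intros y Hy. assert (ma l r <= h y + (P r - P l)); [|lra]. apply ma_le; auto.
    intros x Hx. pose proof (h_bound l r H H0 H1 x y Hx Hy). lra. }
  assert (ma l r - (P r - P l) <= mi l r) by (apply mi_ge; auto). lra.
Qed.

Definition d n (j : nat) := p + INR j * (q - p) / 2 ^ n.

Lemma pow2_pos n : 0 < 2 ^ n.
Proof. apply pow_lt; lra. Qed.

Lemma d_mono n j k : (j <= k)%nat -> d n j <= d n k.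
Proof.
  intros. unfold d. apply le_INR in H. pose proof (pow2_pos n).
  assert (INR j * (q - p) <= INR k * (q-p)) by (apply Rmult_le_compat_r; lra).
  unfold Rdiv. apply Rplus_le_compat_l. apply Rmult_le_compat_r; auto. left; apply Rinv_0_lt_compat; auto.
Qed.

Lemma d_0 n : d n 0 = p.
Proof. unfold d. simpl. field; try (apply Rgt_not_eq, pow2_pos). Qed.

Lemma INR_pow2 n : INR (2 ^ n)%nat = 2 ^ n.
Proof. rewrite pow_INR. replace (INR 2) with 2 by (simpl; lra). reflexivity. Qed.

Lemma d_top n : d n (2^n)%nat = q.
Proof. unfold d. rewrite INR_pow2. field; try (apply Rgt_not_eq, pow2_pos). Qed.

Lemma d_in n j : (j <= 2^n)%nat -> p <= d n j <= q.
Proof.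
  intros. split. rewrite <- (d_0 n). apply d_mono; lia. rewrite <- (d_top n). apply d_mono; lia.
Qed.

Lemma d_even n j : d (S n) (2*j) = d n j.
Proof. unfold d. rewrite mult_INR. simpl. field; try (apply Rgt_not_eq, pow2_pos). Qed.

Lemma d_even2 n j : d (S n) (S (S (2*j))) = d n (S j).
Proof.
  replace (S (S (2*j))) with (2 * S j)%nat by lia. apply d_even.
Qed.

Lemma d_step n j : d n (S j) = d n j + (q - p) / 2 ^ n.
Proof. unfold d. rewrite S_INR. field; try (apply Rgt_not_eq, pow2_pos). Qed.

Definition mi' n j := mi (d n j) (d n (S j)).
Definition ma' n j := ma (d n j) (d n (S j)).
Definition Sn n a b := sumr 0 (2^n) (fun j => lenI (mi' n j) (ma' n j) a b).

Lemma Sn_mono1 n a b : Sn n a b <= Sn (S n) a b.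
Proof.
  unfold Sn. replace (2 ^ S n)%nat with (2 * 2^n)%nat by (simpl; lia).
  assert (E := sumr_pair 0 (2^n) (fun j => lenI (mi' (S n) j) (ma' (S n) j) a b)).
  replace (2*0)%nat with 0%nat in E by lia. rewrite E.
  apply sumr_le. intros j Hj.
  assert (Hj1 : (S (S (2*j)) <= 2 ^ S n)%nat) by (simpl; lia).
  pose proof (d_mono (S n) (2*j) (S (2*j)) ltac:(lia)) as M1.
  pose proof (d_mono (S n) (S (2*j)) (S (S (2*j))) ltac:(lia)) as M2.
  pose proof (d_in (S n) (2*j) ltac:(lia)) as I1.
  pose proof (d_in (S n) (S (S (2*j))) Hj1) as I3.
  rewrite d_even in M1, I1. rewrite d_even2 in M2, I3.
  unfold mi', ma'. rewrite d_even. rewrite d_even2.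
  set (mid := d (S n) (S (2*j))) in *.
  set (l := d n j) in *. set (r := d n (S j)) in *.
  apply lenI_ref.
  - apply mi_le_ma; lra.
  - apply mi_le_ma; lra.
  - pose proof (ma_ge l mid mid ltac:(lra) ltac:(lra) ltac:(lra) ltac:(lra)).
    pose proof (ma_ge mid r mid ltac:(lra) ltac:(lra) ltac:(lra) ltac:(lra)).
    pose proof (mi_le l mid mid ltac:(lra) ltac:(lra) ltac:(lra) ltac:(lra)).
    pose proof (mi_le mid r mid ltac:(lra) ltac:(lra) ltac:(lra) ltac:(lra)).
    unfold Rmax, Rmin; repeat destruct Rle_dec; lra.
  - apply mi_ge; try lra. intros x Hx. destruct (Rle_dec x mid).
    + pose proof (mi_le l mid x ltac:(lra) ltac:(lra) ltac:(lra) ltac:(lra)).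
      pose proof (Rmin_l (mi l mid) (mi mid r)). lra.
    + pose proof (mi_le mid r x ltac:(lra) ltac:(lra) ltac:(lra) ltac:(lra)).
      pose proof (Rmin_r (mi l mid) (mi mid r)). lra.
  - apply ma_le; try lra. intros x Hx. destruct (Rle_dec x mid).
    + pose proof (ma_ge l mid x ltac:(lra) ltac:(lra) ltac:(lra) ltac:(lra)).
      pose proof (Rmax_l (ma l mid) (ma mid r)). lra.
    + pose proof (ma_ge mid r x ltac:(lra) ltac:(lra) ltac:(lra) ltac:(lra)).
      pose proof (Rmax_r (ma l mid) (ma mid r)). lra.
Qed.

Lemma Sn_mono n m a b : (n <= m)%nat -> Sn n a b <= Sn m a b.
Proof.
  induction 1. lra. pose proof (Sn_mono1 m a b). lra.
Qed.

Lemma Sn_add n a b c : a <= b <= c -> Sn n a c = Sn n a b + Sn n b c.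
Proof.
  intros H. unfold Sn. rewrite <- sumr_plus. apply sumr_ext. intros. apply lenI_add; lra.
Qed.

Lemma Sn_nonneg n a b : 0 <= Sn n a b.
Proof. apply sumr_nonneg. intros; apply lenI_nonneg. Qed.

Lemma Sn_pt n a : Sn n a a = 0.
Proof. unfold Sn. rewrite <- (sumr_zero 0 (2^n)). apply sumr_ext. intros; apply lenI_pt. Qed.

Lemma Sn_bound n a b : Sn n a b <= P q - P p.
Proof.
  unfold Sn. eapply Rle_trans.
  - apply (sumr_le _ _ _ (fun j => P (d n (S j)) - P (d n j))).
    intros j Hj. simpl in Hj.
    pose proof (d_mono n j (S j) ltac:(lia)). pose proof (d_in n j ltac:(lia)). pose proof (d_in n (S j) ltac:(lia)).
    unfold mi', ma'. eapply Rle_trans. apply lenI_le. apply mi_le_ma; lra.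
    apply ma_mi; lra.
  - rewrite (sumr_tele 0 (2^n) (fun j => P (d n j))). simpl. rewrite d_top, d_0. lra.
Qed.


Lemma Sn_ge_from (a b K : R) (n1 : nat) : K < Sn n1 a b -> forall n, (n1 <= n)%nat -> K < Sn n a b.
Proof. intros. pose proof (Sn_mono n1 n a b H0). lra. Qed.

Lemma TP B eps a x1 x2 b : 0 <= B -> 0 < eps -> a <= x1 -> x1 <= x2 -> x2 <= b -> a < b ->
  (x2 - x1) * (B + eps) < eps * (b - a) -> (forall n, Sn n a b <= B * (b - a)) ->
  (a < x1 /\ forall n, Sn n a x1 <= (B+eps)*(x1 - a)) \/ (x2 < b /\ forall n, Sn n x2 b <= (B+eps)*(b - x2)).
Proof.
  intros HB He H1 H2 H3 Hab Hsm Hall.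
  apply NNPP; intro Hn. apply not_or_and in Hn; destruct Hn as [HA HC].
  assert (FA : exists n1, forall n, (n1 <= n)%nat -> (B+eps)*(x1-a) <= Sn n a x1 /\
                  (a < x1 -> (B+eps)*(x1-a) < Sn n a x1)).
  { destruct (Req_dec a x1) as [E|E].
    - exists O. intros n _. subst x1. rewrite Sn_pt. split; [lra| intros; lra].
    - assert (a < x1) by lra. assert (~ forall n, Sn n a x1 <= (B+eps)*(x1 - a)) by tauto.
      apply not_all_ex_not in H0. destruct H0 as [n1 Hn1]. exists n1. intros n Hn.
      apply Rnot_le_lt in Hn1. pose proof (Sn_ge_from a x1 _ n1 Hn1 n Hn). split; [lra| intros; lra]. }
  assert (FC : exists n2, forall n, (n2 <= n)%nat -> (B+eps)*(b-x2) <= Sn n x2 b /\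
                  (x2 < b -> (B+eps)*(b-x2) < Sn n x2 b)).
  { destruct (Req_dec x2 b) as [E|E].
    - exists O. intros n _. subst x2. rewrite Sn_pt. split; [lra| intros; lra].
    - assert (x2 < b) by lra. assert (~ forall n, Sn n x2 b <= (B+eps)*(b - x2)) by tauto.
      apply not_all_ex_not in H0. destruct H0 as [n1 Hn1]. exists n1. intros n Hn.
      apply Rnot_le_lt in Hn1. pose proof (Sn_ge_from x2 b _ n1 Hn1 n Hn). split; [lra| intros; lra]. }
  destruct FA as [n1 FA]. destruct FC as [n2 FC].
  destruct (FA (n1 + n2)%nat ltac:(lia)) as [A1 A2]. destruct (FC (n1+n2)%nat ltac:(lia)) as [C1 C2].
  specialize (Hall (n1 + n2)%nat).
  rewrite (Sn_add _ a x1 b) in Hall by lra. rewrite (Sn_add _ x1 x2 b) in Hall by lra.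
  pose proof (Sn_nonneg (n1+n2) x1 x2).
  assert (Hlt : x2 - x1 < b - a).
  { assert ((x2 - x1) * (B + eps) < (b - a) * (B + eps)) by nra.
    apply Rmult_lt_reg_r in H0; lra. }
  assert (Hid : (B+eps)*(x1-a) + (B+eps)*(b-x2) = B*(b-a) + (eps*(b-a) - (x2-x1)*(B+eps))) by ring.
  destruct (Rlt_le_dec a x1).
  - specialize (A2 r). lra.
  - assert (x2 < b) by lra. specialize (C2 H0). lra.
Qed.

Lemma avoid B eps a b e : 0 <= B -> 0 < eps -> a < b -> (forall n, Sn n a b <= B*(b-a)) ->
  exists a' b', a <= a' /\ a' < b' /\ b' <= b /\ ~ (a' <= e <= b') /\
    forall n, Sn n a' b' <= (B+eps)*(b'-a').
Proof.
  intros HB He Hab Hall.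
  destruct (classic (a <= e <= b)) as [Hin|Hout].
  - set (r := eps*(b-a)/(4*(B+eps))).
    assert (Hr : 0 < r) by (unfold r; apply Rdiv_lt_0_compat; nra).
    assert (Hr2 : 2 * r * (B + eps) < eps * (b - a)).
    { unfold r. field_simplify; [|lra]. nra. }
    set (x1 := Rmax a (e - r)). set (x2 := Rmin b (e + r)).
    assert (a <= x1 <= e) by (unfold x1, Rmax; destruct Rle_dec; lra).
    assert (e <= x2 <= b) by (unfold x2, Rmin; destruct Rle_dec; lra).
    assert (x2 - x1 <= 2 * r) by (unfold x1, x2, Rmax, Rmin; repeat destruct Rle_dec; lra).
    destruct (TP B eps a x1 x2 b HB He ltac:(lra) ltac:(lra) ltac:(lra) Hab ltac:(nra) Hall)
      as [[HA1 HA2]|[HC1 HC2]].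
    + exists a, x1. repeat split; try lra. intros Hc.
      assert (x1 = e - r) by (unfold x1, Rmax in *; destruct Rle_dec; lra). lra. auto.
    + exists x2, b. repeat split; try lra. intros Hc.
      assert (x2 = e + r) by (unfold x2, Rmin in *; destruct Rle_dec; lra). lra. auto.
  - exists a, b. repeat split; try lra. auto. intros n. specialize (Hall n). nra.
Qed.

Lemma halve B eps a b : 0 <= B -> 0 < eps -> a < b -> (forall n, Sn n a b <= B*(b-a)) ->
  exists a' b', a <= a' /\ a' < b' /\ b' <= b /\ b' - a' <= (b - a)/2 /\
    forall n, Sn n a' b' <= (B+eps)*(b'-a').
Proof.
  intros HB He Hab Hall.
  destruct (TP B eps a ((a+b)/2) ((a+b)/2) b HB He ltac:(lra) ltac:(lra) ltac:(lra) Hab ltac:(nra) Hall)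
    as [[HA1 HA2]|[HC1 HC2]].
  - exists a, ((a+b)/2). repeat split; auto; lra.
  - exists ((a+b)/2), b. repeat split; auto; lra.
Qed.

Lemma step3 B eps a b e1 e2 : 0 <= B -> 0 < eps -> a < b -> (forall n, Sn n a b <= B*(b-a)) ->
  exists a' b', a <= a' /\ a' < b' /\ b' <= b /\ b' - a' <= (b - a)/2 /\
    ~ (a' <= e1 <= b') /\ ~ (a' <= e2 <= b') /\
    forall n, Sn n a' b' <= (B+3*eps)*(b'-a').
Proof.
  intros HB He Hab Hall.
  destruct (avoid B eps a b e1 HB He Hab Hall) as [a1 [b1 [A1 [A2 [A3 [A4 G1]]]]]].
  destruct (avoid (B+eps) eps a1 b1 e2 ltac:(lra) He ltac:(lra) G1) as [a2 [b2 [B1 [B2 [B3 [B4 G2]]]]]].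
  destruct (halve (B+eps+eps) eps a2 b2 ltac:(lra) He ltac:(lra) G2) as [a3 [b3 [C1 [C2 [C3 [C4 G3]]]]]].
  exists a3, b3. repeat split; try lra.
  all: try (intro; apply A4; lra).
  all: try (intro; apply B4; lra).
  intros n. specialize (G3 n). replace (B + 3*eps) with (B+eps+eps+eps) by ring. auto.
Qed.


Lemma cover n m : (1 <= m)%nat -> forall z, p <= z <= d n m -> exists j, (j < m)%nat /\ d n j <= z <= d n (S j).
Proof.
  induction m; intros Hm z Hz. lia.
  destruct (Nat.eq_dec m 0).
  - subst. exists O. split; [lia|]. rewrite d_0. auto.
  - destruct (Rle_dec z (d n m)).
    + destruct (IHm ltac:(lia) z ltac:(lra)) as [j [Hj Hj']]. exists j. split; auto; lia.
    + exists m. split; [lia|lra].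
Qed.

Lemma ML a0 b0 : a0 < b0 -> exists c, a0 <= c <= b0 /\ exists N : nat, forall zs,
  List.Forall (fun z => p <= z <= q /\ h z = c) zs -> StronglySorted Rlt zs -> (length zs <= N)%nat.
Proof.
  intros Hab.
  set (B0 := (P q - P p)/(b0 - a0)).
  assert (HB0 : 0 <= B0) by (unfold B0; pose proof (P_mono p q ltac:(lra) ltac:(lra) ltac:(lra));
     apply Rmult_le_pos; [lra| left; apply Rinv_0_lt_compat; lra]).
  set (Inv := fun s a b => a0 <= a /\ a < b /\ b <= b0 /\ b - a <= (b0 - a0) / 2^s /\
       forall n, Sn n a b <= (B0 + 6 - 6 * (1/2)^s) * (b - a)).
  set (e1 := fun s => mi' (fst (Cantor.of_nat s)) (snd (Cantor.of_nat s))).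
  set (e2 := fun s => ma' (fst (Cantor.of_nat s)) (snd (Cantor.of_nat s))).
  set (Step := fun s a b a' b' => a <= a' /\ b' <= b /\ ~(a' <= e1 s <= b') /\ ~(a' <= e2 s <= b')).
  assert (I0 : Inv O a0 b0).
  { unfold Inv. simpl. repeat split; try lra. intros n. pose proof (Sn_bound n a0 b0).
    replace ((B0 + 6 - 6 * 1) * (b0 - a0)) with (P q - P p) by (unfold B0; field; lra). auto. }
  assert (IS : forall s a b, Inv s a b -> exists a' b', Inv (S s) a' b' /\ Step s a b a' b').
  { intros s a b [H1 [H2 [H3 [H4 H5]]]].
    assert (Hx : 0 < (1/2)^s) by (apply pow_lt; lra).
    assert (Hx1 : (1/2)^s <= 1) by (apply pow_le1; lra).
    destruct (step3 (B0 + 6 - 6*(1/2)^s) ((1/2)^(S s)) a b (e1 s) (e2 s) ltac:(lra)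
      ltac:(apply pow_lt; lra) H2 H5) as [a' [b' [G1 [G2 [G3 [G4 [G5 [G6 G7]]]]]]]].
    exists a', b'. split; [|unfold Step; tauto].
    unfold Inv. simpl pow. repeat split; try lra.
    - assert (0 < 2^s) by (apply pow_lt; lra).
      assert ((b - a)/2 <= (b0 - a0) / 2^s / 2) by lra.
      replace ((b0 - a0) / (2 * 2^s)) with ((b0 - a0) / 2^s / 2) by (field; lra). lra.
    - intros n. specialize (G7 n). simpl pow in G7. eapply Rle_trans; [exact G7|].
      apply Rmult_le_compat_r; lra. }
  destruct (nested Inv Step a0 b0 I0 IS) as [A [Bq HAB]].
  assert (HA : forall s, A s <= A (S s)) by (intros s; destruct (HAB s) as [_ [? _]]; auto).
  assert (HBq : forall s, Bq (S s) <= Bq s) by (intros s; destruct (HAB s) as [_ [_ [? _]]]; auto).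
  assert (HAB' : forall s, A s < Bq s) by (intros s; destruct (HAB s) as [[_ [? _]] _]; auto).
  assert (HAk : forall s k, A s <= A (s + k)%nat).
  { intros s k; induction k. rewrite Nat.add_0_r; lra. rewrite Nat.add_succ_r. specialize (HA (s+k)%nat). lra. }
  assert (HBk : forall s k, Bq (s + k)%nat <= Bq s).
  { intros s k; induction k. rewrite Nat.add_0_r; lra. rewrite Nat.add_succ_r. specialize (HBq (s+k)%nat). lra. }
  assert (HAB2 : forall s t, A t <= Bq s).
  { intros s t. destruct (Nat.le_ge_cases s t).
    - replace t with (s + (t - s))%nat by lia. specialize (HBk s (t-s)%nat). specialize (HAB' (s + (t-s))%nat). lra.
    - replace s with (t + (s - t))%nat by lia. specialize (HAk t (s-t)%nat). specialize (HAB' (t + (s-t))%nat). lra. }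
  assert (Hbd : bound (fun y => exists s, y = A s)).
  { exists (Bq O). intros y [s ->]. apply HAB2. }
  destruct (completeness _ Hbd (ex_intro _ (A O) (ex_intro _ O eq_refl))) as [c [Hc1 Hc2]].
  assert (HcA : forall s, A s <= c) by (intros s; apply Hc1; exists s; auto).
  assert (HcB : forall s, c <= Bq s) by (intros s; apply Hc2; intros y [t ->]; apply HAB2).
  assert (Hlen : forall s, Bq s - A s <= (b0 - a0)/2^s) by (intros s; destruct (HAB s) as [[_ [_ [_ [? _]]]] _]; auto).
  assert (HSn : forall s n, Sn n (A s) (Bq s) <= (B0 + 6) * (Bq s - A s)).
  { intros s n. destruct (HAB s) as [[_ [? [_ [_ G]]]] _]. specialize (G n).
    assert (0 < (1/2)^s) by (apply pow_lt; lra).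
    assert (0 <= (B0 + 6) * (Bq s - A s) - (B0 + 6 - 6 * (1/2)^s) * (Bq s - A s)) by nra. lra. }
  assert (Havoid : forall n j, c <> mi' n j /\ c <> ma' n j).
  { intros n j. set (s := Cantor.to_nat (n, j)).
    destruct (HAB s) as [_ [_ [_ [G1 G2]]]]. unfold e1, e2 in G1, G2.
    assert (Es : Cantor.of_nat s = (n,j)) by (unfold s; apply Cantor.cancel_of_to).
    rewrite Es in G1, G2. cbn [fst snd] in G1, G2.
    specialize (HcA (S s)). specialize (HcB (S s)).
    split; intro E; [apply G1| apply G2]; rewrite <- E; lra. }
  exists c. split.
  { split. destruct (HAB O) as [[? _] _]. specialize (HcA O). lra.
    destruct (HAB O) as [[_ [_ [? _]]] _]. specialize (HcB O). lra. }
  destruct (nat_above (B0 + 6)) as [N HN]. exists N.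
  intros zs Hz Hs.
  destruct (gap_exists (q - p) zs ltac:(lra) Hs) as [n Hgap].
  set (jdx := fun z => epsilon (inhabits O) (fun j => (j < 2^n)%nat /\ d n j <= z <= d n (S j))).
  assert (Hjdx : forall z, p <= z <= q -> ((jdx z) < 2^n)%nat /\ d n (jdx z) <= z <= d n (S (jdx z))).
  { intros z Hzz. unfold jdx. apply (epsilon_spec (inhabits O) (fun j => (j < 2^n)%nat /\ d n j <= z <= d n (S j))).
    apply cover. pose proof (Nat.pow_nonzero 2 n ltac:(lia)). lia. rewrite d_top. auto. }
  assert (Hjlt : forall z z', p <= z <= q -> p <= z' <= q -> (q-p)/2^n < z' - z -> (jdx z < jdx z')%nat).
  { intros z z' H1 H2 H3. destruct (Hjdx z H1) as [J1 J2]. destruct (Hjdx z' H2) as [J3 J4].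
    destruct (Nat.lt_ge_cases (jdx z) (jdx z')); auto. exfalso.
    pose proof (d_mono n (S (jdx z')) (S (jdx z)) ltac:(lia)). rewrite (d_step n (jdx z)) in H0. lra. }
  set (js := map jdx zs).
  assert (Hjs : StronglySorted lt js /\ List.Forall (fun j => (0 <= j < 0 + 2^n)%nat /\ mi' n j < c < ma' n j) js).
  { unfold js. clear -Hz Hgap Hjlt Hjdx Havoid Hpq Hvar. induction Hgap as [|a l Hl IH Hal].
    - split; constructor.
    - inversion Hz as [|? ? Ha Hl']; subst. destruct (IH Hl') as [IH1 IH2]. split.
      + simpl. constructor; auto. rewrite List.Forall_forall in *. intros j Hj.
        apply in_map_iff in Hj. destruct Hj as [z' [<- Hz']]. apply Hjlt; auto.
        apply Ha. apply Hl'; auto.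
      + simpl. constructor; auto. destruct Ha as [Ha Hha]. destruct (Hjdx a Ha) as [J1 J2].
        split; [lia|]. pose proof (d_in n (jdx a) ltac:(lia)). pose proof (d_in n (S (jdx a)) ltac:(lia)).
        pose proof (mi_le (d n (jdx a)) (d n (S (jdx a))) a ltac:(lra) ltac:(lra) ltac:(lra) ltac:(lra)) as M1.
        pose proof (ma_ge (d n (jdx a)) (d n (S (jdx a))) a ltac:(lra) ltac:(lra) ltac:(lra) ltac:(lra)) as M2.
        destruct (Havoid n (jdx a)) as [N1 N2]. unfold mi', ma' in *. rewrite Hha in M1, M2.
        split; [destruct (Rle_lt_or_eq _ _ M1) as [E|E]; [auto| exfalso; apply N1; rewrite E; reflexivity] | destruct (Rle_lt_or_eq _ _ M2) as [E|E]; [auto| exfalso; apply N2; exact E]]. }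
  destruct Hjs as [Hjs1 Hjs2].
  assert (Hs0 : exists s, List.Forall (fun j => mi' n j <= A s /\ Bq s <= ma' n j) js).
  { clear Hjs1. induction js as [|j js IH].
    - exists O; constructor.
    - inversion Hjs2; subst. destruct (IH H2) as [s2 Hs2].
      destruct H1 as [_ [Hm1 Hm2]].
      destruct (mesh_small (b0 - a0) (Rmin (c - mi' n j) (ma' n j - c)) ltac:(apply Rmin_pos; lra)) as [s1 Hs1].
      exists (s1 + s2)%nat. constructor.
      + pose proof (mesh_anti (b0 - a0) s1 (s1+s2)%nat ltac:(lra) ltac:(lia)).
        pose proof (Hlen (s1+s2)%nat). pose proof (HcA (s1+s2)%nat). pose proof (HcB (s1+s2)%nat).
        pose proof (Rmin_l (c - mi' n j) (ma' n j - c)). pose proof (Rmin_r (c - mi' n j) (ma' n j - c)).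
        split; lra.
      + rewrite List.Forall_forall in *. intros x Hx. specialize (Hs2 x Hx).
        replace (s1 + s2)%nat with (s2 + s1)%nat by lia.
        pose proof (HAk s2 s1). pose proof (HBk s2 s1). lra. }
  destruct Hs0 as [s Hs0].
  assert (E1 : suml (fun j => lenI (mi' n j) (ma' n j) (A s) (Bq s)) js = INR (length js) * (Bq s - A s)).
  { apply suml_const. rewrite List.Forall_forall in *. intros j Hj. specialize (Hs0 j Hj).
    apply lenI_full; try lra. specialize (HAB' s); lra. }
  assert (E2 : suml (fun j => lenI (mi' n j) (ma' n j) (A s) (Bq s)) js <= Sn n (A s) (Bq s)).
  { apply suml_le_sumr; auto. intros; apply lenI_nonneg.
    rewrite List.Forall_forall in *. intros j Hj. apply Hjs2; auto. }
  pose proof (HSn s n). specialize (HAB' s).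
  assert (INR (length js) <= B0 + 6).
  { assert (INR (length js) * (Bq s - A s) <= (B0 + 6) * (Bq s - A s)) by lra.
    apply Rmult_le_reg_r in H0; lra. }
  unfold js in H0. rewrite length_map in H0. apply INR_le. lra.
Qed.

End Meas.

Definition ALT (D : R -> R) (L : R) (k : nat) (pt : nat -> R) : Prop :=
  0 < pt O /\ pt k < L /\ (forall i, (i < k)%nat -> pt i < pt (S i)) /\
  (forall i, (i < k)%nat -> D (pt i) * D (pt (S i)) < 0).

Lemma chain_le (pt : nat -> R) k : (forall i, (i < k)%nat -> pt i < pt (S i)) ->
  forall i j, (i <= j <= k)%nat -> pt i <= pt j.
Proof.
  intros H i j Hij. destruct Hij as [H1 H2]. induction H1. lra.
  specialize (H m ltac:(lia)). specialize (IHle ltac:(lia)). lra.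
Qed.

Lemma chain_lt (pt : nat -> R) k : (forall i, (i < k)%nat -> pt i < pt (S i)) ->
  forall i j, (i < j <= k)%nat -> pt i < pt j.
Proof.
  intros H i j Hij. pose proof (chain_le pt k H (S i) j ltac:(lia)). specialize (H i ltac:(lia)). lra.
Qed.

Lemma mk_switch D c0 d0 z eta : c0 < z < d0 -> D z = 0 -> 0 < eta ->
  (forall x, 0 < x <= eta -> D (z - x) * D (z + x) < 0) -> sign_switch D c0 d0 z z.
Proof.
  intros Hz Hz0 He H. unfold sign_switch. split; [lra|]. split; [lra|]. split; [lra|].
  split. { intros x Hx. replace x with z by lra. auto. }
  exists (Rmin eta (Rmin (z - c0) (d0 - z))). split.
  { apply Rmin_pos; auto. apply Rmin_pos; lra. }
  split. { apply Rmin_r. }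
  intros x Hx. apply H. pose proof (Rmin_l eta (Rmin (z - c0) (d0 - z))). lra.
Qed.

Lemma inD_facts f : inD f ->
  cont01 f /\ (forall x, 0 <= x <= 1 -> 0 <= f x <= 1) /\
  (forall x y, 0 <= x -> x <= y -> y <= 1 -> f y <= f x) /\
  (forall x, 0 <= x < 1 -> 0 < f x).
Proof.
  intros [H1 [H2 [H3 [H4 H5]]]]. split; auto. split; auto. split.
  - intros x y Hx Hxy Hy. destruct (Rle_lt_or_eq _ _ Hxy). left; apply H3; auto. subst; lra.
  - intros x Hx. rewrite <- H5. apply H3; lra.
Qed.

Lemma aL_le1 a : 0 < a -> a * Rmin 1 (/ a) <= 1.
Proof.
  intros Ha. pose proof (Rmin_r 1 (/a)). apply Rmult_le_compat_l with (r := a) in H; [|lra].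
  rewrite Rinv_r in H; lra.
Qed.

Lemma Lpos a : 0 < a -> 0 < Rmin 1 (/ a).
Proof. intros; apply Rmin_pos; [lra| apply Rinv_0_lt_compat; auto]. Qed.

Lemma contI_Delta F G a c : inD F -> inD G -> 0 < a ->
  contI (fun x => F (a * x) - c * G x) 0 (Rmin 1 (/ a)).
Proof.
  intros HF HG Ha. apply contI_lin.
  - apply contI_scale; auto. eapply contI_sub. apply (proj1 HF). lra. apply aL_le1; auto.
  - eapply contI_sub. apply (proj1 HG). lra. apply Rmin_l.
Qed.

Lemma min_abs_pos (D : R -> R) (pt : nat -> R) k : (forall i, (i <= k)%nat -> D (pt i) <> 0) ->
  exists rho, 0 < rho /\ forall i, (i <= k)%nat -> rho <= Rabs (D (pt i)).
Proof.
  induction k; intros H.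
  - exists (Rabs (D (pt O))). split. apply Rabs_pos_lt; apply H; lia. intros i Hi. replace i with O by lia; lra.
  - destruct IHk as [r [Hr Hr']]. intros; apply H; lia.
    exists (Rmin r (Rabs (D (pt (S k))))). split. apply Rmin_pos; auto. apply Rabs_pos_lt; apply H; lia.
    intros i Hi. destruct (Nat.eq_dec i (S k)). subst. apply Rmin_r.
    pose proof (Rmin_l r (Rabs (D (pt (S k))))). specialize (Hr' i ltac:(lia)). lra.
Qed.

Lemma ratio_var (u w : R -> R) (p q m : R) :
  0 < m -> (forall x, p <= x <= q -> 0 <= u x <= 1 /\ m <= w x) ->
  (forall s t, p <= s -> s <= t -> t <= q -> u t <= u s /\ w t <= w s) ->
  forall s t, p <= s -> s <= t -> t <= q ->
  Rabs (u t / w t - u s / w s) <= (- u t / m - w t / (m*m)) - (- u s / m - w s / (m*m)).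
Proof.
  intros Hm Hb Hmon s t Hs Hst Ht.
  destruct (Hb s ltac:(lra)) as [[Us1 Us2] Ws]. destruct (Hb t ltac:(lra)) as [[Ut1 Ut2] Wt].
  destruct (Hmon s t Hs Hst Ht) as [Hu Hw].
  assert (A1 : u s / w s - u t / w t <= (u s - u t) / m).
  { assert (u s / w s - u t / w t <= (u s - u t) / w s).
    { unfold Rdiv. assert (/ w s <= / w t) by (apply Rinv_le_contravar; lra).
      assert (u t * / w s <= u t * / w t) by (apply Rmult_le_compat_l; lra). nra. }
    assert ((u s - u t) / w s <= (u s - u t) / m).
    { unfold Rdiv. apply Rmult_le_compat_l; [lra|]. apply Rinv_le_contravar; lra. }
    lra. }
  assert (A2 : u t / w t - u s / w s <= (w s - w t) / (m * m)).
  { assert (u t / w t - u s / w s <= u t / w t - u t / w s).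
    { unfold Rdiv. assert (u t * / w s <= u s * / w s) by (apply Rmult_le_compat_r; [left; apply Rinv_0_lt_compat; lra| lra]). lra. }
    assert (u t / w t - u t / w s = u t * ((w s - w t) / (w s * w t))) by (field; lra).
    assert ((w s - w t) / (w s * w t) <= (w s - w t) / (m * m)).
    { unfold Rdiv. apply Rmult_le_compat_l; [lra|]. apply Rinv_le_contravar. nra.
      apply Rmult_le_compat; lra. }
    assert (0 <= (w s - w t) / (w s * w t)).
    { unfold Rdiv. apply Rmult_le_pos; [lra|]. left; apply Rinv_0_lt_compat; nra. }
    assert (u t * ((w s - w t) / (w s * w t)) <= (w s - w t) / (w s * w t)).
    { assert (u t * ((w s - w t) / (w s * w t)) <= 1 * ((w s - w t) / (w s * w t))) by (apply Rmult_le_compat_r; lra). lra. }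
    lra. }
  assert (E : (- u t / m - w t / (m*m)) - (- u s / m - w s / (m*m)) = (u s - u t)/m + (w s - w t)/(m*m)) by (field; lra).
  rewrite E.
  assert (0 <= (u s - u t)/m) by (unfold Rdiv; apply Rmult_le_pos; [lra| left; apply Rinv_0_lt_compat; lra]).
  assert (0 <= (w s - w t)/(m*m)) by (unfold Rdiv; apply Rmult_le_pos; [lra| left; apply Rinv_0_lt_compat; nra]).
  unfold Rabs; destruct Rcase_abs; lra.
Qed.

Lemma sign_keep (D e : R) : Rabs e <= Rabs D / 2 -> D <> 0 -> 0 < (D - e) * D.
Proof.
  intros H HD. assert (0 < Rabs D) by (apply Rabs_pos_lt; auto).
  assert (e * D <= Rabs e * Rabs D) by (rewrite <- Rabs_mult; apply Rle_abs).
  assert (Rabs e * Rabs D <= Rabs D / 2 * Rabs D) by (apply Rmult_le_compat_r; lra).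
  assert (D * D = Rabs D * Rabs D) by (rewrite <- Rabs_mult; rewrite Rabs_right; [ring| nra]).
  nra.
Qed.

Lemma KEY F G a b k pt : inD F -> inD G -> 0 < a -> 0 < b ->
  ALT (fun x => F (a*x) - b * G x) (Rmin 1 (/a)) k pt ->
  exists c, 0 < c /\ chi_ge (fun x => F (a*x) - c * G x) 0 (Rmin 1 (/a)) k.
Proof.
  intros HF HG Ha Hb HALT.
  destruct k as [|k'].
  { exists b; split; auto. exists nil; split; [constructor| split; [reflexivity| constructor]]. }
  set (k := S k') in *.
  set (L := Rmin 1 (/a)) in *.
  destruct HALT as [H0 [Hk [Hinc Halt]]].
  destruct (inD_facts F HF) as [Fc [Fb [Fm Fp]]].
  destruct (inD_facts G HG) as [Gc [Gb [Gm Gp]]].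
  set (p := pt O) in *. set (q := pt k) in *.
  assert (Hpq : p < q) by (apply (chain_lt pt k Hinc); lia).
  assert (HL1 : L <= 1) by apply Rmin_l.
  assert (HaL : a * L <= 1) by (apply aL_le1; auto).
  assert (Hq1 : q < 1) by lra.
  assert (Haq : a * q < 1) by (assert (a * q < a * L) by (apply Rmult_lt_compat_l; lra); lra).
  set (m := G q) in *.
  assert (Hm : 0 < m) by (apply Gp; lra).
  set (h := fun x => F (a*x) / G x).
  set (P := fun x => - F (a*x) / m - G x / (m*m)).
  assert (Hvar : forall s t, p <= s -> s <= t -> t <= q -> Rabs (h t - h s) <= P t - P s).
  { intros s t Hs Hst Ht. unfold h, P.
    apply (ratio_var (fun x => F (a*x)) G p q m Hm); auto.
    - intros x Hx. split. apply Fb. split; [nra|]. nra. apply Gm; lra.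
    - intros s' t' H1 H2 H3. split. apply Fm; nra. apply Gm; lra. }
  set (Db := fun x => F (a*x) - b * G x).
  assert (Hnz : forall i, (i <= k)%nat -> Db (pt i) <> 0).
  { intros i Hi. destruct (Nat.eq_dec i k).
    - subst i. specialize (Halt k' ltac:(unfold k; lia)). fold k in Halt. intro E. unfold Db in E. rewrite E in Halt. lra.
    - specialize (Halt i ltac:(lia)). intro E. unfold Db in E. rewrite E in Halt. lra. }
  destruct (min_abs_pos Db pt k Hnz) as [rho [Hrho Hrho']].
  set (r := Rmin (rho/2) (b/2)).
  assert (Hr : 0 < r) by (apply Rmin_pos; lra).
  destruct (ML h P p q Hpq Hvar (b - r) (b + r) ltac:(lra)) as [c [Hc [N HN]]].
  assert (Hc0 : 0 < c) by (pose proof (Rmin_r (rho/2) (b/2)); fold r in H; lra).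
  set (Dc := fun x => F (a*x) - c * G x).
  assert (Hsg : forall i, (i <= k)%nat -> 0 < Dc (pt i) * Db (pt i)).
  { intros i Hi. replace (Dc (pt i)) with (Db (pt i) - (c - b) * G (pt i)) by (unfold Dc, Db; ring).
    apply sign_keep; [|apply Hnz; auto].
    specialize (Hrho' i Hi).
    assert (Hpi : p <= pt i <= q) by (split; apply (chain_le pt k Hinc); lia).
    destruct (Gb (pt i) ltac:(lra)) as [G1 G2].
    rewrite Rabs_mult. rewrite (Rabs_right (G (pt i))) by lra.
    assert (Rabs (c - b) <= r) by (unfold Rabs; destruct Rcase_abs; lra).
    assert (r <= rho/2) by (unfold r; apply Rmin_l).
    assert (Rabs (c - b) * G (pt i) <= Rabs (c-b) * 1) by (apply Rmult_le_compat_l; [apply Rabs_pos|lra]).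
    lra. }
  assert (Halt_c : forall i, (i < k)%nat -> Dc (pt i) * Dc (pt (S i)) < 0).
  { intros i Hi. pose proof (Hsg i ltac:(lia)). pose proof (Hsg (S i) ltac:(lia)).
    assert (Halt' : Db (pt i) * Db (pt (S i)) < 0) by (unfold Db; apply Halt; auto).
    assert (0 < (Dc (pt i) * Db (pt i)) * (Dc (pt (S i)) * Db (pt (S i)))) by (apply Rmult_lt_0_compat; auto).
    set (X := Dc (pt i)) in *. set (Y := Dc (pt (S i))) in *. set (X' := Db (pt i)) in *. set (Y' := Db (pt (S i))) in *.
    assert (E : (X * Y) * (X' * Y') = (X * X') * (Y * Y')) by ring.
    destruct (Rlt_le_dec (X * Y) 0); auto.
    assert ((X * Y) * (X' * Y') <= 0) by nra. lra. }
  assert (Hzero : forall z, p <= z <= q -> (Dc z = 0 <-> h z = c)).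
  { intros z Hz. assert (0 < G z) by (apply Gp; lra). unfold Dc, h. split; intro E.
    - replace (F (a*z)) with (c * G z) by lra. field. apply Rgt_not_eq; lra.
    - assert (F (a*z) = c * G z) by (rewrite <- E; field; apply Rgt_not_eq; lra). lra. }
  assert (Hbound : forall i, (i < k)%nat -> forall zs, zlist Dc (pt i) (pt (S i)) zs -> (length zs <= N)%nat).
  { intros i Hi zs [HZF HS]. apply HN; auto. rewrite List.Forall_forall in *. intros z Hz.
    destruct (HZF z Hz) as [Hz1 Hz2].
    assert (p <= pt i) by (apply (chain_le pt k Hinc); lia).
    assert (pt (S i) <= q) by (apply (chain_le pt k Hinc); lia).
    split; [lra|]. apply Hzero; auto; lra. }
  assert (HcD : contI Dc 0 L) by (apply contI_Delta; auto).
  assert (Hsw : forall i, (i < k)%nat -> exists z, pt i < z < pt (S i) /\ sign_switch Dc 0 L z z).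
  { intros i Hi. pose proof (Hinc i Hi) as Hinci.
    assert (Hpi : p <= pt i) by (apply (chain_le pt k Hinc); lia).
    assert (Hpi' : pt (S i) <= q) by (apply (chain_le pt k Hinc); lia).
    assert (Hc' : contI Dc (pt i) (pt (S i))) by (eapply contI_sub; [exact HcD| lra | lra]).
    specialize (Halt_c i Hi).
    destruct (Rlt_le_dec 0 (Dc (pt i))) as [Pos|Neg].
    - assert (Dc (pt (S i)) < 0) by nra.
      destruct (CL N (pt i) (pt (S i)) Dc Hinci Hc' Pos H (Hbound i Hi)) as [z [eta [Hz [Hz0 [He Hs]]]]].
      exists z. split; auto. apply (mk_switch Dc 0 L z eta); auto; try lra.
      intros x Hx. destruct (Hs x Hx). nra.
    - assert (Dc (pt i) < 0) by (destruct (Rle_lt_or_eq _ _ Neg); auto; rewrite H in Halt_c; lra).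
      assert (0 < Dc (pt (S i))) by nra.
      destruct (CL N (pt i) (pt (S i)) (fun x => - Dc x) Hinci (contI_opp _ _ _ Hc') ltac:(lra) ltac:(lra))
        as [z [eta [Hz [Hz0 [He Hs]]]]].
      { intros zs [HZF HS]. apply (Hbound i Hi). split; auto. rewrite List.Forall_forall in *.
        intros z Hz. destruct (HZF z Hz). split; auto; lra. }
      exists z. split; auto. apply (mk_switch Dc 0 L z eta); auto; try lra.
      intros x Hx. destruct (Hs x Hx). nra. }
  set (zf := fun i => epsilon (inhabits 0) (fun z => pt i < z < pt (S i) /\ sign_switch Dc 0 L z z)).
  assert (Hzf : forall i, (i < k)%nat -> pt i < zf i < pt (S i) /\ sign_switch Dc 0 L (zf i) (zf i)).
  { intros i Hi. unfold zf. apply (epsilon_spec (inhabits 0) (fun z => pt i < z < pt (S i) /\ sign_switch Dc 0 L z z)).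
    apply Hsw; auto. }
  exists c. split; auto.
  exists (map (fun i => (zf i, zf i)) (seq 0 k)). split; [|split].
  - apply NoDup_map_NoDup_ForallPairs; [|apply seq_NoDup].
    intros i j Hi Hj E. apply in_seq in Hi. apply in_seq in Hj. injection E as E.
    destruct (Hzf i ltac:(lia)) as [Zi _]. destruct (Hzf j ltac:(lia)) as [Zj _].
    destruct (Nat.lt_total i j) as [Hlt|[Heq|Hgt]]; auto.
    + pose proof (chain_le pt k Hinc (S i) j ltac:(lia)). lra.
    + pose proof (chain_le pt k Hinc (S j) i ltac:(lia)). lra.
  - rewrite length_map, length_seq. reflexivity.
  - apply List.Forall_forall. intros [x y] Hxy. apply in_map_iff in Hxy. destruct Hxy as [i [E Hi]].
    injection E as E1 E2. subst. apply in_seq in Hi. simpl. apply Hzf; lia.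
Qed.

Lemma lub_le (E : Rbar -> Prop) (b : Rbar) : (forall x, E x -> Rbar_le x b) -> Rbar_le (Rbar_lub E) b.
Proof. intros H. unfold Rbar_lub. destruct (Rbar_ex_lub E) as [l [Hu Hl]]. simpl. apply Hl. exact H. Qed.

Lemma le_lub (E : Rbar -> Prop) (x : Rbar) : E x -> Rbar_le x (Rbar_lub E).
Proof. intros H. unfold Rbar_lub. destruct (Rbar_ex_lub E) as [l [Hu Hl]]. simpl. apply Hu; auto. Qed.

Lemma firstn_props {A} (m : nat) (l : list A) : NoDup l -> NoDup (firstn m l) /\ incl (firstn m l) l.
Proof.
  revert m; induction l as [|a l IH]; intros m Hn.
  - destruct m; simpl; split; try apply NoDup_nil; intros x Hx; destruct Hx.
  - destruct m; simpl.
    + split; [apply NoDup_nil| intros x Hx; destruct Hx].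
    + apply NoDup_cons_iff in Hn; destruct Hn as [Hna Hnl]. destruct (IH m Hnl) as [H3 H4]. split.
      * apply NoDup_cons; [intro Hin; exact (Hna (H4 a Hin)) | exact H3].
      * intros x [Hx|Hx]. left; auto. right; apply H4; auto.
Qed.

Lemma chi_ge_mono D c0 d0 n m : chi_ge D c0 d0 n -> (m <= n)%nat -> chi_ge D c0 d0 m.
Proof.
  intros [l [Hnd [Hlen HF]]] Hmn. destruct (firstn_props m l Hnd) as [H1 H2].
  exists (firstn m l). split; [auto|split].
  - rewrite length_firstn. lia.
  - rewrite List.Forall_forall in *. intros x Hx. apply HF. apply H2; auto.
Qed.

Lemma sign_switch_ext D1 D2 c0 d0 c d : (forall x, c0 <= x <= d0 -> D1 x = D2 x) ->
  sign_switch D1 c0 d0 c d -> sign_switch D2 c0 d0 c d.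
Proof.
  intros E [H1 [H2 [H3 [H4 [del [Hd1 [Hd2 Hd3]]]]]]].
  pose proof (Rmin_l (c - c0) (d0 - d)). pose proof (Rmin_r (c - c0) (d0 - d)).
  split; auto. split; auto. split; auto. split.
  - intros x Hx. rewrite <- E by lra. auto.
  - exists del. split; auto. split; auto. intros x Hx. rewrite <- !E by lra. auto.
Qed.

Lemma chi_ge_ext D1 D2 c0 d0 n : (forall x, c0 <= x <= d0 -> D1 x = D2 x) ->
  chi_ge D1 c0 d0 n -> chi_ge D2 c0 d0 n.
Proof.
  intros E [l [H1 [H2 H3]]]. exists l. split; auto. split; auto.
  eapply List.Forall_impl; [|exact H3]. intros [c d]. simpl. apply sign_switch_ext; auto.
Qed.

Definition Dl (F G : R -> R) (a b : R) := fun x => F (a * x) - b * G x.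

Lemma chi_le_of D c0 d0 k : (~ chi_ge D c0 d0 (S k)) -> Rbar_le (chi D c0 d0) (INR k).
Proof.
  intros Hn. unfold chi. apply lub_le. intros x [n [-> Hn']]. simpl.
  apply le_INR. destruct (Nat.le_gt_cases n k); auto. exfalso. apply Hn. eapply chi_ge_mono; eauto.
Qed.

Lemma chi_ge_of D c0 d0 k : chi_ge D c0 d0 k -> Rbar_le (INR k) (chi D c0 d0).
Proof. intros H. unfold chi. apply le_lub. exists k; auto. Qed.

Lemma crossing_char F G : crossing F G = Finite 2 <->
  ((forall a b, 0 < a -> 0 < b -> ~ chi_ge (Dl F G a b) 0 (Rmin 1 (/a)) 3) /\
   (exists a b, 0 < a /\ 0 < b /\ chi_ge (Dl F G a b) 0 (Rmin 1 (/a)) 2)).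
Proof.
  split.
  - intros Hc. split.
    + intros a b Ha Hb H3. pose proof (chi_ge_of _ _ _ _ H3).
      assert (Rbar_le (chi (Dl F G a b) 0 (Rmin 1 (/a))) (crossing F G)).
      { unfold crossing. apply le_lub. exists a, b. split; auto. }
      rewrite Hc in H0. destruct (chi (Dl F G a b) 0 (Rmin 1 (/a))); simpl in *; try contradiction.
      simpl in H. lra.
    + apply NNPP. intro Hn.
      assert (Rbar_le (crossing F G) (INR 1)).
      { unfold crossing. apply lub_le. intros x [a [b [Ha [Hb ->]]]].
        apply chi_le_of. intro H2. apply Hn. exists a, b. auto. }
      rewrite Hc in H. simpl in H. lra.
  - intros [H3 [a [b [Ha [Hb H2]]]]]. apply Rbar_le_antisym.
    + unfold crossing. apply lub_le. intros x [a' [b' [Ha' [Hb' ->]]]].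
      replace (Finite 2) with (Finite (INR 2)) by (simpl; f_equal; lra).
      apply chi_le_of. apply H3; auto.
    + eapply Rbar_le_trans; [|unfold crossing; apply le_lub; exists a, b; split; [|split]; [exact Ha|exact Hb|reflexivity]].
      replace (Finite 2) with (Finite (INR 2)) by (simpl; f_equal; lra).
      apply chi_ge_of. exact H2.
Qed.

Lemma sw_points D c0 d0 c d : sign_switch D c0 d0 c d -> forall eps, 0 < eps ->
  exists x y, c0 < x < c /\ c - eps < x /\ d < y < d0 /\ y < d + eps /\ D x * D y < 0.
Proof.
  intros [H1 [H2 [H3 [H4 [del [Hd1 [Hd2 Hd3]]]]]]] eps He.
  pose proof (Rmin_l (c - c0) (d0 - d)). pose proof (Rmin_r (c - c0) (d0 - d)).
  set (t := Rmin del eps / 2).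
  assert (0 < t) by (unfold t; pose proof (Rmin_pos del eps Hd1 He); lra).
  assert (t < del) by (unfold t; pose proof (Rmin_l del eps); lra).
  assert (t < eps) by (unfold t; pose proof (Rmin_r del eps); lra).
  exists (c - t), (d + t). repeat split; try lra. apply Hd3; lra.
Qed.

Lemma sw_order D c0 d0 c d c' d' : sign_switch D c0 d0 c d -> sign_switch D c0 d0 c' d' ->
  (c, d) <> (c', d') -> d < c' \/ d' < c.
Proof.
  intros S1 S2 Hne. apply NNPP; intro Hn. apply not_or_and in Hn. destruct Hn as [N1 N2].
  destruct S1 as [A1 [A2 [A3 [A4 [e [Ae1 [Ae2 Ae3]]]]]]].
  destruct S2 as [B1 [B2 [B3 [B4 [e' [Be1 [Be2 Be3]]]]]]].
  assert (Hc : c = c').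
  { destruct (Rtotal_order c c') as [Hlt|[Heq|Hgt]]; auto; exfalso.
    - assert (Hx : exists x, 0 < x /\ x <= e' /\ x <= c' - c) by (exists (Rmin e' (c' - c)); split; [apply Rmin_pos; lra| split; [apply Rmin_l|apply Rmin_r]]).
      destruct Hx as [x [Hx1 [Hx2 Hx3]]]. specialize (Be3 x ltac:(lra)). rewrite (A4 (c' - x)) in Be3 by lra. lra.
    - assert (Hx : exists x, 0 < x /\ x <= e /\ x <= c - c') by (exists (Rmin e (c - c')); split; [apply Rmin_pos; lra| split; [apply Rmin_l|apply Rmin_r]]).
      destruct Hx as [x [Hx1 [Hx2 Hx3]]]. specialize (Ae3 x ltac:(lra)). rewrite (B4 (c - x)) in Ae3 by lra. lra. }
  subst c'.
  assert (Hd : d = d').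
  { destruct (Rtotal_order d d') as [Hlt|[Heq|Hgt]]; auto; exfalso.
    - assert (Hx : exists x, 0 < x /\ x <= e /\ x <= d' - d) by (exists (Rmin e (d' - d)); split; [apply Rmin_pos; lra| split; [apply Rmin_l|apply Rmin_r]]).
      destruct Hx as [x [Hx1 [Hx2 Hx3]]]. specialize (Ae3 x ltac:(lra)). rewrite (B4 (d + x)) in Ae3 by lra. lra.
    - assert (Hx : exists x, 0 < x /\ x <= e' /\ x <= d - d') by (exists (Rmin e' (d - d')); split; [apply Rmin_pos; lra| split; [apply Rmin_l|apply Rmin_r]]).
      destruct Hx as [x [Hx1 [Hx2 Hx3]]]. specialize (Be3 x ltac:(lra)). rewrite (A4 (d' + x)) in Be3 by lra. lra. }
  subst. apply Hne; auto.
Qed.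

Lemma sgn_chain A B C : 0 < A * B -> B * C < 0 -> A * C < 0.
Proof.
  intros H1 H2. assert (B <> 0) by (intro; subst; lra).
  assert (0 < B * B) by (destruct (Rlt_le_dec B 0); nra).
  assert ((A * C) * (B * B) = (A * B) * (B * C)) by ring.
  destruct (Rlt_le_dec (A * C) 0); auto. nra.
Qed.

Lemma sgn_flip A B : ~ (A * B < 0) -> A <> 0 -> B <> 0 -> 0 < A * B.
Proof.
  intros H HA HB. destruct (Rlt_le_dec 0 (A*B)); auto. exfalso. apply H.
  destruct (Rle_lt_or_eq _ _ r); auto. apply Rmult_integral in H0. tauto.
Qed.

Definition pt4 (a b c d : R) (i : nat) : R :=
  match i with O => a | 1%nat => b | 2%nat => c | _ => d end.

Lemma ALT4 (D : R -> R) L a b c d : 0 < a -> a < b -> b < c -> c < d -> d < L ->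
  D a * D b < 0 -> D b * D c < 0 -> D c * D d < 0 -> ALT D L 3 (pt4 a b c d).
Proof.
  intros. unfold ALT. simpl. split; auto. split; auto. split.
  - intros i Hi. destruct i as [|[|[|i]]]; simpl; auto; lia.
  - intros i Hi. destruct i as [|[|[|i]]]; simpl; auto; lia.
Qed.

Lemma ALT3 (D : R -> R) L a b c : 0 < a -> a < b -> b < c -> c < L ->
  D a * D b < 0 -> D b * D c < 0 -> ALT D L 2 (pt4 a b c c).
Proof.
  intros. unfold ALT. simpl. split; auto. split; auto. split.
  - intros i Hi. destruct i as [|[|i]]; simpl; auto; lia.
  - intros i Hi. destruct i as [|[|i]]; simpl; auto; lia.
Qed.

Lemma nz_of (D : R -> R) x y : D x * D y < 0 -> D x <> 0 /\ D y <> 0.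
Proof. intros H; split; intro E; rewrite E in H; lra. Qed.

Lemma sorted3_ALT D L c1 d1 c2 d2 c3 d3 :
  sign_switch D 0 L c1 d1 -> sign_switch D 0 L c2 d2 -> sign_switch D 0 L c3 d3 ->
  d1 < c2 -> d2 < c3 -> exists pt, ALT D L 3 pt.
Proof.
  intros S1 S2 S3 H12 H23.
  set (eps := Rmin (c2 - d1) (c3 - d2) / 2).
  assert (He : 0 < eps) by (unfold eps; pose proof (Rmin_pos (c2 - d1) (c3 - d2) ltac:(lra) ltac:(lra)); lra).
  assert (He1 : 2 * eps <= c2 - d1) by (unfold eps; pose proof (Rmin_l (c2 - d1) (c3 - d2)); lra).
  assert (He2 : 2 * eps <= c3 - d2) by (unfold eps; pose proof (Rmin_r (c2 - d1) (c3 - d2)); lra).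
  pose proof (proj1 (proj2 S1)). pose proof (proj1 (proj2 S2)). pose proof (proj1 (proj2 S3)).
  destruct (sw_points D 0 L c1 d1 S1 eps He) as [x1 [y1 [X1 [X1' [Y1 [Y1' P1]]]]]].
  destruct (sw_points D 0 L c2 d2 S2 eps He) as [x2 [y2 [X2 [X2' [Y2 [Y2' P2]]]]]].
  destruct (sw_points D 0 L c3 d3 S3 eps He) as [x3 [y3 [X3 [X3' [Y3 [Y3' P3]]]]]].
  destruct (nz_of D _ _ P1). destruct (nz_of D _ _ P2). destruct (nz_of D _ _ P3).
  destruct (classic (D y1 * D x2 < 0)) as [Q1|Q1].
  - exists (pt4 x1 y1 x2 y2). apply ALT4; auto; lra.
  - apply sgn_flip in Q1; auto.
    assert (R1 : D y1 * D y2 < 0) by (apply (sgn_chain _ (D x2)); auto).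
    destruct (classic (D y2 * D x3 < 0)) as [Q2|Q2].
    + exists (pt4 x1 y1 y2 x3). apply ALT4; auto; lra.
    + apply sgn_flip in Q2; auto.
      assert (R2 : D y2 * D y3 < 0) by (apply (sgn_chain _ (D x3)); auto).
      exists (pt4 x1 y1 y2 y3). apply ALT4; auto; lra.
Qed.

Lemma sorted2_ALT D L c1 d1 c2 d2 :
  sign_switch D 0 L c1 d1 -> sign_switch D 0 L c2 d2 ->
  d1 < c2 -> exists pt, ALT D L 2 pt.
Proof.
  intros S1 S2 H12.
  set (eps := (c2 - d1) / 2).
  assert (He : 0 < eps) by (unfold eps; lra).
  pose proof (proj1 (proj2 S1)). pose proof (proj1 (proj2 S2)).
  destruct (sw_points D 0 L c1 d1 S1 eps He) as [x1 [y1 [X1 [X1' [Y1 [Y1' P1]]]]]].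
  destruct (sw_points D 0 L c2 d2 S2 eps He) as [x2 [y2 [X2 [X2' [Y2 [Y2' P2]]]]]].
  destruct (nz_of D _ _ P1). destruct (nz_of D _ _ P2).
  destruct (classic (D y1 * D x2 < 0)) as [Q1|Q1].
  - exists (pt4 x1 y1 x2 x2). apply ALT3; auto; unfold eps in *; lra.
  - apply sgn_flip in Q1; auto.
    assert (R1 : D y1 * D y2 < 0) by (apply (sgn_chain _ (D x2)); auto).
    exists (pt4 x1 y1 y2 y2). apply ALT3; auto; unfold eps in *; lra.
Qed.

Lemma chi3_ALT D L : chi_ge D 0 L 3 -> exists pt, ALT D L 3 pt.
Proof.
  intros [l [Hnd [Hlen HF]]].
  destruct l as [|[c1 d1] [|[c2 d2] [|[c3 d3] [|]]]]; simpl in Hlen; try lia.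
  inversion HF as [|? ? S1 HF1]; subst. inversion HF1 as [|? ? S2 HF2]; subst.
  inversion HF2 as [|? ? S3 _]; subst. simpl in S1, S2, S3.
  apply NoDup_cons_iff in Hnd. destruct Hnd as [N1 Hnd]. apply NoDup_cons_iff in Hnd. destruct Hnd as [N2 _].
  assert (D12 : (c1, d1) <> (c2, d2)) by (intro E; apply N1; rewrite E; left; auto).
  assert (D13 : (c1, d1) <> (c3, d3)) by (intro E; apply N1; rewrite E; right; left; auto).
  assert (D23 : (c2, d2) <> (c3, d3)) by (intro E; apply N2; rewrite E; left; auto).
  pose proof (proj1 (proj2 S1)). pose proof (proj1 (proj2 S2)). pose proof (proj1 (proj2 S3)).
  destruct (sw_order D 0 L _ _ _ _ S1 S2 D12) as [O12|O21];
  destruct (sw_order D 0 L _ _ _ _ S1 S3 D13) as [O13|O31];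
  destruct (sw_order D 0 L _ _ _ _ S2 S3 D23) as [O23|O32].
  - apply (sorted3_ALT D L c1 d1 c2 d2 c3 d3); auto.
  - apply (sorted3_ALT D L c1 d1 c3 d3 c2 d2); auto.
  - lra.
  - apply (sorted3_ALT D L c3 d3 c1 d1 c2 d2); auto.
  - apply (sorted3_ALT D L c2 d2 c1 d1 c3 d3); auto.
  - lra.
  - apply (sorted3_ALT D L c2 d2 c3 d3 c1 d1); auto.
  - apply (sorted3_ALT D L c3 d3 c2 d2 c1 d1); auto.
Qed.

Lemma chi2_ALT D L : chi_ge D 0 L 2 -> exists pt, ALT D L 2 pt.
Proof.
  intros [l [Hnd [Hlen HF]]].
  destruct l as [|[c1 d1] [|[c2 d2] [|]]]; simpl in Hlen; try lia.
  inversion HF as [|? ? S1 HF1]; subst. inversion HF1 as [|? ? S2 HF2]; subst.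
  simpl in S1, S2.
  apply NoDup_cons_iff in Hnd. destruct Hnd as [N1 Hnd].
  assert (D12 : (c1, d1) <> (c2, d2)) by (intro E; apply N1; rewrite E; left; auto).
  destruct (sw_order D 0 L _ _ _ _ S1 S2 D12) as [O12|O21].
  - apply (sorted2_ALT D L c1 d1 c2 d2); auto.
  - apply (sorted2_ALT D L c2 d2 c1 d1); auto.
Qed.

Definition fe (f : R -> R) := fun x => f (clamp 0 1 x).
Definition Ge (f : R -> R) (x : R) := RInt (fe f) x 1.
Definition Ie (f : R -> R) (x : R) := Ge f x / int01 f.

Lemma contpt_continuous (phi : R -> R) x : continuity_pt phi x -> continuous phi x.
Proof. intros H. apply continuity_pt_filterlim. auto. Qed.

Lemma fe_cont f : inD f -> forall x, continuous (fe f) x.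
Proof. intros Hf x. apply contpt_continuous. apply contI_clamp. lra. apply (proj1 Hf). Qed.

Lemma fe_eq f x : 0 <= x <= 1 -> fe f x = f x.
Proof. intros; unfold fe; rewrite clamp_id; auto. Qed.

Lemma exR f a b : inD f -> ex_RInt (fe f) a b.
Proof. intros Hf. apply (@ex_RInt_continuous R_CompleteNormedModule). intros; apply fe_cont; auto. Qed.

Lemma Ge_eq f x : 0 <= x <= 1 -> RInt f x 1 = Ge f x.
Proof.
  intros Hx. unfold Ge. apply RInt_ext. intros t Ht. rewrite fe_eq; auto.
  unfold Rmin, Rmax in Ht; destruct Rle_dec; lra.
Qed.

Lemma int01_eq f : int01 f = Ge f 0.
Proof. unfold int01. apply Ge_eq. lra. Qed.

Lemma Ge_deriv f x : inD f -> is_derive (Ge f) x (- fe f x).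
Proof.
  intros Hf. unfold Ge. apply (is_derive_RInt' (fe f) (fun a => RInt (fe f) a 1) x 1).
  - apply filter_forall. intros a. apply (@RInt_correct R_CompleteNormedModule). apply exR; auto.
  - apply fe_cont; auto.
Qed.

Lemma Ge_cont f x : inD f -> continuity_pt (Ge f) x.
Proof.
  intros Hf. apply continuity_pt_filterlim. apply (@ex_derive_continuous R_AbsRing R_NormedModule). exists (- fe f x). apply Ge_deriv; auto.
Qed.

Lemma Ge_diff f x y : inD f -> Ge f x - Ge f y = RInt (fe f) x y.
Proof.
  intros Hf. unfold Ge. pose proof (RInt_Chasles (fe f) x y 1 (exR f x y Hf) (exR f y 1 Hf)).
  rewrite <- H. unfold plus; simpl. lra.
Qed.

Lemma RInt_fe_pos f x y : inD f -> 0 <= x -> x < y -> y <= 1 -> 0 < RInt (fe f) x y.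
Proof.
  intros Hf Hx Hxy Hy. apply RInt_gt_0; auto.
  - intros t Ht. rewrite fe_eq by lra. destruct (inD_facts f Hf) as [_ [_ [_ Hp]]]. apply Hp; lra.
  - intros; apply fe_cont; auto.
Qed.

Lemma RInt_fe_nonneg f x y : inD f -> x <= y -> 0 <= RInt (fe f) x y.
Proof.
  intros Hf Hxy. apply RInt_ge_0; auto. apply exR; auto.
  intros t Ht. unfold fe. destruct (inD_facts f Hf) as [_ [Hb _]]. apply Hb. apply clamp_in. lra.
Qed.

Lemma int01_pos f : inD f -> 0 < int01 f.
Proof. intros Hf. rewrite int01_eq. unfold Ge. apply RInt_fe_pos; auto; lra. Qed.

Lemma Iop_eq f x : 0 <= x <= 1 -> Iop f x = Ie f x.
Proof. intros Hx. unfold Iop, Ie. rewrite Ge_eq; auto. Qed.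

Lemma Ie_deriv f x : inD f -> is_derive (Ie f) x (- fe f x / int01 f).
Proof.
  intros Hf. unfold Ie.
  pose proof (is_derive_scal (Ge f) x (/ int01 f) _ (Ge_deriv f x Hf)) as H.
  replace (- fe f x / int01 f) with (/ int01 f * - fe f x) by (unfold Rdiv; ring).
  eapply is_derive_ext; [|exact H]. intros t; simpl; unfold Rdiv; ring.
Qed.

Lemma Ie_cont f x : inD f -> continuity_pt (Ie f) x.
Proof.
  intros Hf. apply continuity_pt_filterlim. apply (@ex_derive_continuous R_AbsRing R_NormedModule). eexists. apply Ie_deriv; auto.
Qed.

Lemma cont_contI (phi : R -> R) l r : (forall x, continuity_pt phi x) -> contI phi l r.
Proof.
  intros H x Hx eps He. destruct (H x eps He) as [d [Hd Hd']]. exists d; split; auto.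
  intros y Hy Hxy. destruct (Req_dec y x). subst. rewrite Rminus_eq_0, Rabs_R0; auto.
  apply (Hd' y). split. split. exact I. auto. simpl. unfold R_dist. auto.
Qed.

Lemma contI_ext (phi psi : R -> R) l r : (forall x, l <= x <= r -> phi x = psi x) -> contI phi l r -> contI psi l r.
Proof.
  intros E H x Hx eps He. destruct (H x Hx eps He) as [d [Hd Hd']]. exists d; split; auto.
  intros y Hy Hxy. rewrite <- !E by auto. auto.
Qed.

Lemma Iop_inD f : inD f -> inD (Iop f).
Proof.
  intros Hf. pose proof (int01_pos f Hf) as HF.
  assert (HGe0 : Ge f 0 = int01 f) by (rewrite int01_eq; auto).
  split; [|split; [|split; [|split]]].
  - apply (contI_ext (Ie f)). intros; rewrite Iop_eq; auto. apply cont_contI. intros; apply Ie_cont; auto.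
  - intros x Hx. rewrite Iop_eq by auto. unfold Ie.
    assert (0 <= Ge f x) by (unfold Ge; apply RInt_fe_nonneg; auto; lra).
    assert (Ge f x <= int01 f) by (rewrite <- HGe0; pose proof (Ge_diff f 0 x Hf); pose proof (RInt_fe_nonneg f 0 x Hf ltac:(lra)); lra).
    split. apply Rmult_le_pos; [lra| left; apply Rinv_0_lt_compat; auto].
    apply Rmult_le_reg_r with (r := int01 f); auto. unfold Rdiv. rewrite Rmult_assoc, Rinv_l by lra. lra.
  - intros x y Hx Hxy Hy. rewrite !Iop_eq by lra. unfold Ie.
    pose proof (Ge_diff f x y Hf). pose proof (RInt_fe_pos f x y Hf Hx Hxy Hy).
    apply Rmult_lt_compat_r. apply Rinv_0_lt_compat; auto. lra.
  - rewrite Iop_eq by lra. unfold Ie. rewrite HGe0. field. lra.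
  - rewrite Iop_eq by lra. unfold Ie, Ge. rewrite RInt_point. unfold zero; simpl. field. lra.
Qed.

Lemma sgn_transfer X X' Y Y' : 0 < X * X' -> 0 < Y * Y' -> X' * Y' < 0 -> X * Y < 0.
Proof.
  intros H1 H2 H3. assert (E : (X * Y) * (X' * Y') = (X * X') * (Y * Y')) by ring.
  assert (0 < (X * X') * (Y * Y')) by (apply Rmult_lt_0_compat; auto).
  destruct (Rlt_le_dec (X * Y) 0); auto. nra.
Qed.

Lemma sgn_pos_chain A B C : 0 < A * B -> 0 < B * C -> 0 < A * C.
Proof.
  intros H1 H2. assert (B <> 0) by (intro; subst; lra).
  assert (0 < B * B) by (destruct (Rlt_le_dec B 0); nra).
  assert ((A * C) * (B * B) = (A * B) * (B * C)) by ring.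
  assert (0 < (A * B) * (B * C)) by (apply Rmult_lt_0_compat; auto).
  destruct (Rlt_le_dec 0 (A * C)); auto. nra.
Qed.

Lemma unif_pts (phi : R -> R) l r (Hc : contI phi l r) (pt : nat -> R) k rho : 0 < rho ->
  (forall i, (i <= k)%nat -> l <= pt i <= r) ->
  exists eta, 0 < eta /\ forall i, (i <= k)%nat -> forall y, l <= y <= r -> Rabs (y - pt i) < eta ->
    Rabs (phi y - phi (pt i)) < rho.
Proof.
  intros Hr Hpt. induction k.
  - destruct (Hc (pt O) (Hpt O ltac:(lia)) rho Hr) as [d [Hd Hd']]. exists d. split; auto.
    intros i Hi. replace i with O by lia. auto.
  - destruct IHk as [e1 [He1 H1]]. { intros; apply Hpt; lia. }
    destruct (Hc (pt (S k)) (Hpt (S k) ltac:(lia)) rho Hr) as [d [Hd Hd']].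
    exists (Rmin e1 d). split. apply Rmin_pos; auto.
    intros i Hi y Hy Hyi. pose proof (Rmin_l e1 d). pose proof (Rmin_r e1 d).
    destruct (Nat.eq_dec i (S k)). subst. apply Hd'; auto; lra. apply H1; auto; lia || lra.
Qed.

Lemma perturb (phi psi : R -> R) b k (pt : nat -> R) : contI phi 0 1 ->
  (forall i, (i <= k)%nat -> 0 <= pt i <= 1) ->
  (forall i, (i <= k)%nat -> Dl phi psi 1 b (pt i) <> 0) ->
  exists eta, 0 < eta /\ forall a', Rabs (a' - 1) < eta -> (forall i, (i <= k)%nat -> a' * pt i <= 1) ->
    forall i, (i <= k)%nat -> 0 < Dl phi psi a' b (pt i) * Dl phi psi 1 b (pt i).
Proof.
  intros Hc Hpt Hnz.
  destruct (min_abs_pos (Dl phi psi 1 b) pt k Hnz) as [rho [Hrho Hrho']].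
  destruct (unif_pts phi 0 1 Hc pt k (rho/2) ltac:(lra) Hpt) as [eta [He H]].
  exists (Rmin eta (1/2)). split. apply Rmin_pos; lra.
  intros a' Ha' Hle i Hi. pose proof (Rmin_l eta (1/2)). pose proof (Rmin_r eta (1/2)).
  assert (Hapos : 0 < a') by (apply Rabs_def2 in Ha'; lra).
  specialize (Hpt i Hi). specialize (Hle i Hi).
  assert (Hy : 0 <= a' * pt i <= 1) by (split; [apply Rmult_le_pos; lra| auto]).
  assert (Hd : Rabs (a' * pt i - pt i) < eta).
  { replace (a' * pt i - pt i) with ((a' - 1) * pt i) by ring. rewrite Rabs_mult.
    rewrite (Rabs_right (pt i)) by lra.
    assert (Rabs (a' - 1) * pt i <= Rabs (a' - 1) * 1) by (apply Rmult_le_compat_l; [apply Rabs_pos| lra]). lra. }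
  specialize (H i Hi (a' * pt i) Hy Hd).
  unfold Dl. replace (phi (a' * pt i) - b * psi (pt i)) with
    ((phi (1 * pt i) - b * psi (pt i)) - (phi (pt i) - phi (a' * pt i))) by (rewrite Rmult_1_l; ring).
  apply sign_keep.
  - specialize (Hrho' i Hi). unfold Dl in Hrho'. rewrite Rabs_minus_sym. lra.
  - apply Hnz; auto.
Qed.

Definition De (f g : R -> R) (a b : R) := fun x => Ie f (a * x) - b * Ie g x.

Lemma De_deriv f g a b x : inD f -> inD g ->
  is_derive (De f g a b) x (a * (- fe f (a*x) / int01 f) - b * (- fe g x / int01 g)).
Proof.
  intros Hf Hg.
  assert (H1 : is_derive (fun y => Ie f (a*y)) x (a * (- fe f (a*x) / int01 f))).
  { pose proof (is_derive_scal (fun t => t) x a 1 (is_derive_id x)) as Hl.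
    pose proof (is_derive_comp (Ie f) (fun y => a * y) x _ _ (Ie_deriv f (a*x) Hf) Hl) as H.
    unfold scal in H; simpl in H. unfold mult in H; simpl in H.
    replace (a * (- fe f (a*x) / int01 f)) with (a * 1 * (- fe f (a * x) / int01 f)) by ring. exact H. }
  assert (H2 : is_derive (fun y => b * Ie g y) x (b * (- fe g x / int01 g))).
  { apply is_derive_scal. apply Ie_deriv; auto. }
  pose proof (is_derive_minus _ _ x _ _ H1 H2) as H. unfold minus, plus, opp in H; simpl in H.
  unfold De. eapply is_derive_ext; [|exact H]. intros t; simpl. ring.
Qed.

Lemma De_cont f g a b x : inD f -> inD g -> continuity_pt (De f g a b) x.
Proof.
  intros Hf Hg. apply continuity_pt_filterlim. apply (@ex_derive_continuous R_AbsRing R_NormedModule).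
  eexists. apply De_deriv; auto.
Qed.

Lemma MVT_sign f g a b s t : inD f -> inD g -> 0 < a -> 0 < b -> s < t ->
  0 <= s -> t <= Rmin 1 (/a) ->
  De f g a b s * De f g a b t < 0 ->
  exists xi, s <= xi <= t /\
    0 < Dl f g a (b * int01 f / (a * int01 g)) xi * De f g a b s.
Proof.
  intros Hf Hg Ha Hb Hst Hs Ht Hsg.
  pose proof (int01_pos f Hf). pose proof (int01_pos g Hg).
  destruct (MVT_gen (De f g a b) s t (fun x => a * (- fe f (a*x) / int01 f) - b * (- fe g x / int01 g)))
    as [c [Hc Hc']].
  { intros x Hx. apply De_deriv; auto. }
  { intros x Hx. apply De_cont; auto. }
  rewrite Rmin_left in Hc by lra. rewrite Rmax_right in Hc by lra.
  exists c. split; auto.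
  assert (HaL : a * Rmin 1 (/a) <= 1) by (apply aL_le1; auto).
  assert (HL1 : Rmin 1 (/a) <= 1) by apply Rmin_l.
  assert (Hac : 0 <= a * c <= 1) by (split; [apply Rmult_le_pos; lra| nra]).
  rewrite (fe_eq f) in Hc' by auto. rewrite (fe_eq g) in Hc' by lra.
  unfold Dl.
  set (Ds := De f g a b s) in *. set (Dt := De f g a b t) in *.
  assert (E : a * (- f (a * c) / int01 f) - b * (- g c / int01 g) =
              - (a / int01 f) * (f (a * c) - b * int01 f / (a * int01 g) * g c)) by (field; lra).
  rewrite E in Hc'.
  set (dd := f (a * c) - b * int01 f / (a * int01 g) * g c) in *.
  assert (Hpos : 0 < a / int01 f) by (apply Rdiv_lt_0_compat; lra).
  assert (Q : (Dt - Ds) * Ds < 0) by nra.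
  rewrite Hc' in Q.
  assert (Q2 : (- (a / int01 f) * dd) * Ds < 0).
  { assert (Q' : (- (a / int01 f) * dd * (t - s)) * Ds = ((- (a / int01 f) * dd) * Ds) * (t - s)) by ring.
    rewrite Q' in Q. destruct (Rlt_le_dec ((- (a / int01 f) * dd) * Ds) 0); auto. nra. }
  assert (Q3 : (- (a / int01 f) * dd) * Ds = - (a / int01 f) * (dd * Ds)) by ring.
  rewrite Q3 in Q2. nra.
Qed.

Lemma near_end (phi : R -> R) l r m : contI phi l r -> l < r -> m < r -> phi r <> 0 ->
  exists y, m < y < r /\ l < y /\ 0 < phi y * phi r.
Proof.
  intros Hc Hlr Hm Hnz.
  destruct (Hc r ltac:(lra) (Rabs (phi r)) ltac:(apply Rabs_pos_lt; auto)) as [d [Hd Hd']].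
  set (y := r - Rmin (d/2) (Rmin (r - m) (r - l)) / 2).
  pose proof (Rmin_l (d/2) (Rmin (r - m) (r - l))). pose proof (Rmin_r (d/2) (Rmin (r - m) (r - l))).
  pose proof (Rmin_l (r - m) (r - l)). pose proof (Rmin_r (r - m) (r - l)).
  assert (0 < Rmin (d/2) (Rmin (r - m) (r - l))) by (apply Rmin_pos; [lra| apply Rmin_pos; lra]).
  exists y. unfold y. split; [lra|]. split; [lra|].
  specialize (Hd' (r - Rmin (d/2) (Rmin (r - m) (r - l)) / 2) ltac:(lra)).
  assert (Rabs (r - Rmin (d / 2) (Rmin (r - m) (r - l)) / 2 - r) < d).
  { rewrite Rabs_left by lra. lra. }
  specialize (Hd' H4). set (v := phi (r - Rmin (d / 2) (Rmin (r - m) (r - l)) / 2)) in *.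
  unfold Rabs in *. destruct (Rcase_abs (v - phi r)); destruct (Rcase_abs (phi r)); nra.
Qed.

Lemma ALT_ext (D1 D2 : R -> R) L k pt : (forall x, 0 < x < L -> D1 x = D2 x) -> ALT D1 L k pt -> ALT D2 L k pt.
Proof.
  intros E [H0 [Hk [Hinc Halt]]]. split; auto. split; auto. split; auto.
  intros i Hi. assert (0 < pt i < L) by (split; [pose proof (chain_le pt k Hinc O i ltac:(lia)); lra| pose proof (chain_le pt k Hinc i k ltac:(lia)); lra]).
  assert (0 < pt (S i) < L) by (split; [pose proof (chain_le pt k Hinc O (S i) ltac:(lia)); lra| pose proof (chain_le pt k Hinc (S i) k ltac:(lia)); lra]).
  rewrite <- !E by auto. apply Halt; auto.
Qed.

Lemma L_props a : 0 < a -> 0 < Rmin 1 (/a) /\ Rmin 1 (/a) <= 1 /\ a * Rmin 1 (/a) <= 1.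
Proof. intros Ha. split. apply Lpos; auto. split. apply Rmin_l. apply aL_le1; auto. Qed.

Lemma Dl_De f g a b x : 0 < a -> 0 < x < Rmin 1 (/a) -> Dl (Iop f) (Iop g) a b x = De f g a b x.
Proof.
  intros Ha Hx. destruct (L_props a Ha) as [_ [H1 H2]].
  assert (a * x <= 1) by (assert (a * x <= a * Rmin 1 (/a)) by (apply Rmult_le_compat_l; lra); lra).
  unfold Dl, De. rewrite (Iop_eq f (a*x)) by (split; [nra|lra]). rewrite (Iop_eq g x) by lra. reflexivity.
Qed.

Lemma endpoint_sign f g a b : inD f -> inD g -> 0 < a -> 0 < b -> a <> 1 ->
  0 < De f g a b (Rmin 1 (/a)) * Dl f g a (b * int01 f / (a * int01 g)) (Rmin 1 (/a)).
Proof.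
  intros Hf Hg Ha Hb Ha1.
  pose proof (int01_pos f Hf). pose proof (int01_pos g Hg).
  assert (Hb' : 0 < b * int01 f / (a * int01 g)) by (apply Rdiv_lt_0_compat; nra).
  destruct (inD_facts f Hf) as [_ [Fb [_ Fp]]]. destruct (inD_facts g Hg) as [_ [Gb [_ Gp]]].
  pose proof (Iop_inD f Hf) as HIf. pose proof (Iop_inD g Hg) as HIg.
  destruct (inD_facts _ HIf) as [_ [_ [_ IFp]]]. destruct (inD_facts _ HIg) as [_ [_ [_ IGp]]].
  destruct (Rlt_le_dec 1 a) as [Hgt|Hle].
  - assert (/a < 1) by (rewrite <- Rinv_1; apply Rinv_lt_contravar; lra).
    assert (0 < /a) by (apply Rinv_0_lt_compat; lra).
    rewrite Rmin_right by lra. unfold De, Dl. rewrite Rinv_r by lra.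
    rewrite <- !Iop_eq by lra. destruct HIf as [_ [_ [_ [_ E1]]]]. destruct Hf as [_ [_ [_ [_ E2]]]].
    rewrite E1, E2. specialize (IGp (/a) ltac:(lra)). specialize (Gp (/a) ltac:(lra)).
    assert (A1 : 0 < b * Iop g (/a)) by (apply Rmult_lt_0_compat; lra).
    assert (A2 : 0 < b * int01 f / (a * int01 g) * g (/a)) by (apply Rmult_lt_0_compat; lra).
    nra.
  - assert (a < 1) by lra. assert (1 < /a) by (rewrite <- Rinv_1; apply Rinv_lt_contravar; lra).
    rewrite Rmin_left by lra. unfold De, Dl. rewrite Rmult_1_r.
    rewrite <- !Iop_eq by lra. destruct HIg as [_ [_ [_ [_ E1]]]]. destruct Hg as [_ [_ [_ [_ E2]]]].
    rewrite E1, E2. specialize (IFp a ltac:(lra)). specialize (Fp a ltac:(lra)).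
    rewrite !Rmult_0_r, !Rminus_0_r. apply Rmult_lt_0_compat; lra.
Qed.

Lemma UB_core f g a b t : inD f -> inD g -> 0 < a -> 0 < b -> a <> 1 ->
  ALT (De f g a b) (Rmin 1 (/a)) 3 t ->
  exists c, 0 < c /\ chi_ge (Dl f g a c) 0 (Rmin 1 (/a)) 3.
Proof.
  intros Hf Hg Ha Hb Ha1 [H0 [Hk [Hinc Halt]]].
  set (L := Rmin 1 (/a)) in *.
  destruct (L_props a Ha) as [HL0 [HL1 HaL]]. fold L in HL0, HL1, HaL.
  pose proof (int01_pos f Hf). pose proof (int01_pos g Hg).
  set (b' := b * int01 f / (a * int01 g)).
  assert (Hb' : 0 < b') by (apply Rdiv_lt_0_compat; nra).
  set (dl := Dl f g a b'). set (D := De f g a b) in *.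
  pose proof (Hinc O ltac:(lia)) as I0. pose proof (Hinc 1%nat ltac:(lia)) as I1. pose proof (Hinc 2%nat ltac:(lia)) as I2.
  pose proof (Halt O ltac:(lia)) as A0. pose proof (Halt 1%nat ltac:(lia)) as A1. pose proof (Halt 2%nat ltac:(lia)) as A2.
  destruct (MVT_sign f g a b (t O) (t 1%nat) Hf Hg Ha Hb I0 ltac:(lra) ltac:(fold L; lra) A0) as [x0 [Hx0 P0]].
  destruct (MVT_sign f g a b (t 1%nat) (t 2%nat) Hf Hg Ha Hb I1 ltac:(lra) ltac:(fold L; lra) A1) as [x1 [Hx1 P1]].
  destruct (MVT_sign f g a b (t 2%nat) (t 3%nat) Hf Hg Ha Hb I2 ltac:(lra) ltac:(fold L; lra) A2) as [x2 [Hx2 P2]].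
  fold b' dl D in P0, P1, P2.
  assert (S01 : dl x0 * dl x1 < 0) by (apply (sgn_transfer _ (D (t O)) _ (D (t 1%nat))); auto).
  assert (S12 : dl x1 * dl x2 < 0) by (apply (sgn_transfer _ (D (t 1%nat)) _ (D (t 2%nat))); auto).
  assert (O01 : x0 < x1).
  { destruct (Rle_lt_or_eq x0 x1 ltac:(lra)); auto. subst. nra. }
  assert (O12 : x1 < x2).
  { destruct (Rle_lt_or_eq x1 x2 ltac:(lra)); auto. subst. nra. }
  assert (Hend : 0 < D L * dl L) by (apply endpoint_sign; auto).
  assert (Hx3 : exists x3, t 3%nat <= x3 <= L /\ 0 < dl x3 * D (t 3%nat)).
  { destruct (Rlt_le_dec (D L * D (t 3%nat)) 0) as [Hn|Hn].
    - destruct (MVT_sign f g a b (t 3%nat) L Hf Hg Ha Hb Hk ltac:(lra) ltac:(fold L; lra) ltac:(rewrite Rmult_comm; auto))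
        as [x3 [Hx3 P3]]. exists x3. split; auto.
    - exists L. split; [lra|].
      assert (D (t 3%nat) <> 0) by (intro E; rewrite E in A2; lra).
      assert (D L <> 0) by (intro E; rewrite E in Hend; lra).
      assert (0 < D L * D (t 3%nat)) by (destruct (Rle_lt_or_eq _ _ Hn) as [Q|Q]; auto; symmetry in Q; apply Rmult_integral in Q; tauto).
      apply (sgn_pos_chain _ (D L)); auto. rewrite Rmult_comm; auto. }
  destruct Hx3 as [x3 [Hx3 P3]].
  assert (S23 : dl x2 * dl x3 < 0) by (apply (sgn_transfer _ (D (t 2%nat)) _ (D (t 3%nat))); auto).
  assert (O23 : x2 < x3).
  { destruct (Rle_lt_or_eq x2 x3 ltac:(lra)); auto. subst. nra. }
  assert (Hx4 : exists x4, x2 < x4 < L /\ dl x2 * dl x4 < 0).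
  { destruct (Rle_lt_or_eq x3 L ltac:(lra)) as [Hlt|Heq].
    - exists x3. split; [lra| auto].
    - subst x3.
      assert (HdL : dl L <> 0) by (intro E; rewrite E in Hend; lra).
      destruct (near_end dl 0 L x2 (contI_Delta f g a b' Hf Hg Ha) HL0 ltac:(lra) HdL) as [y [Hy [Hy0 Py]]].
      exists y. split; [lra|]. rewrite Rmult_comm in S23.
      destruct (Rlt_le_dec (dl x2 * dl y) 0) as [Q|Q]; auto.
      exfalso. destruct (Rle_lt_or_eq _ _ Q) as [Q1|Q1].
      + assert (Z1 : 0 < (dl x2 * dl y) * (dl y * dl L)) by (apply Rmult_lt_0_compat; auto).
        assert (Z2 : (dl x2 * dl y) * (dl y * dl L) = (dl L * dl x2) * (dl y * dl y)) by ring.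
        assert (0 <= dl y * dl y) by nra. nra.
      + symmetry in Q1. apply Rmult_integral in Q1. destruct Q1 as [E|E]; rewrite E in *; lra. }
  destruct Hx4 as [x4 [Hx4 P4]].
  apply (KEY f g a b' 3 (pt4 x0 x1 x2 x4) Hf Hg Ha Hb').
  apply ALT4; auto; try lra. fold L; lra.
Qed.

Lemma UB f g : inD f -> inD g ->
  (forall a b, 0 < a -> 0 < b -> ~ chi_ge (Dl f g a b) 0 (Rmin 1 (/a)) 3) ->
  forall a b, 0 < a -> 0 < b -> ~ chi_ge (Dl (Iop f) (Iop g) a b) 0 (Rmin 1 (/a)) 3.
Proof.
  intros Hf Hg Hno a b Ha Hb Hc.
  destruct (chi3_ALT _ _ Hc) as [pt Hpt].
  apply (ALT_ext _ (De f g a b)) in Hpt; [|intros; apply Dl_De; auto].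
  destruct (Req_dec a 1) as [E|Ha1].
  - subst a. destruct Hpt as [H0 [Hk [Hinc Halt]]].
    assert (L1 : Rmin 1 (/1) = 1) by (rewrite Rinv_1; apply Rmin_left; lra). rewrite L1 in Hk.
    assert (Hin : forall i, (i <= 3)%nat -> 0 <= pt i <= 1).
    { intros i Hi. split. pose proof (chain_le pt 3 Hinc O i ltac:(lia)); lra. pose proof (chain_le pt 3 Hinc i 3 ltac:(lia)); lra. }
    assert (Hnz : forall i, (i <= 3)%nat -> Dl (Ie f) (Ie g) 1 b (pt i) <> 0).
    { intros i Hi E. destruct (Nat.eq_dec i 3).
      - subst. specialize (Halt 2%nat ltac:(lia)). unfold De in Halt. unfold Dl in E. rewrite E in Halt. lra.
      - specialize (Halt i ltac:(lia)). unfold De in Halt. unfold Dl in E. rewrite E in Halt. lra. }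
    destruct (perturb (Ie f) (Ie g) b 3 pt (cont_contI _ 0 1 (fun x => Ie_cont f x Hf)) Hin Hnz) as [eta [He Hp]].
    set (th := Rmin (eta/2) ((1 - pt 3%nat)/2)).
    assert (Hth : 0 < th) by (apply Rmin_pos; lra).
    pose proof (Rmin_l (eta/2) ((1 - pt 3%nat)/2)). pose proof (Rmin_r (eta/2) ((1 - pt 3%nat)/2)). fold th in H, H1.
    set (a' := 1 + th).
    assert (Ha'1 : a' * pt 3%nat < 1) by (unfold a'; nra).
    assert (Hle : forall i, (i <= 3)%nat -> a' * pt i <= 1).
    { intros i Hi. pose proof (chain_le pt 3 Hinc i 3 ltac:(lia)). assert (a' * pt i <= a' * pt 3%nat) by (apply Rmult_le_compat_l; unfold a'; lra). lra. }
    assert (Habs : Rabs (a' - 1) < eta) by (unfold a'; rewrite Rabs_right; lra).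
    specialize (Hp a' Habs Hle).
    assert (ALT (De f g a' b) (Rmin 1 (/a')) 3 pt).
    { split; auto. split.
      - assert (/a' < 1) by (rewrite <- Rinv_1; apply Rinv_lt_contravar; unfold a'; lra).
        rewrite Rmin_right by lra. apply Rmult_lt_reg_l with (r := a'). unfold a'; lra.
        rewrite Rinv_r by (unfold a'; lra). auto.
      - split; auto. intros i Hi.
        apply (sgn_transfer _ (De f g 1 b (pt i)) _ (De f g 1 b (pt (S i)))); auto.
        apply Hp; lia. apply Hp; lia. }
    destruct (UB_core f g a' b pt Hf Hg ltac:(unfold a'; lra) Hb ltac:(unfold a'; lra) H2) as [c [Hc0 Hcc]].
    apply (Hno a' c); auto. unfold a'; lra.
  - destruct (UB_core f g a b pt Hf Hg Ha Hb Ha1 Hpt) as [c [Hc0 Hcc]].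
    apply (Hno a c); auto.
Qed.

Lemma near_start (phi : R -> R) l r m : contI phi l r -> l < r -> l < m -> phi l <> 0 ->
  exists y, l < y < m /\ y < r /\ 0 < phi y * phi l.
Proof.
  intros Hc Hlr Hm Hnz.
  destruct (Hc l ltac:(lra) (Rabs (phi l)) ltac:(apply Rabs_pos_lt; auto)) as [d [Hd Hd']].
  set (e := Rmin (d/2) (Rmin (m - l) (r - l)) / 2).
  pose proof (Rmin_l (d/2) (Rmin (m - l) (r - l))). pose proof (Rmin_r (d/2) (Rmin (m - l) (r - l))).
  pose proof (Rmin_l (m - l) (r - l)). pose proof (Rmin_r (m - l) (r - l)).
  assert (0 < Rmin (d/2) (Rmin (m - l) (r - l))) by (apply Rmin_pos; [lra| apply Rmin_pos; lra]).
  exists (l + e). unfold e. split; [lra|]. split; [lra|].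
  specialize (Hd' (l + Rmin (d/2) (Rmin (m - l) (r - l)) / 2) ltac:(lra)).
  assert (Rabs (l + Rmin (d / 2) (Rmin (m - l) (r - l)) / 2 - l) < d).
  { rewrite Rabs_right by lra. lra. }
  specialize (Hd' H4). set (v := phi (l + Rmin (d / 2) (Rmin (m - l) (r - l)) / 2)) in *.
  unfold Rabs in *. destruct (Rcase_abs (v - phi l)); destruct (Rcase_abs (phi l)); nra.
Qed.

Lemma LB F G x0 : inD F -> inD G -> 0 < x0 < 1 -> G x0 < F x0 ->
  exists a b, 0 < a /\ 0 < b /\ chi_ge (Dl F G a b) 0 (Rmin 1 (/a)) 2.
Proof.
  intros HF HG Hx0 Hlt.
  destruct (inD_facts F HF) as [Fc [Fb [Fm Fp]]]. destruct (inD_facts G HG) as [Gc [Gb [Gm Gp]]].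
  assert (HG0 : 0 < G x0) by (apply Gp; lra).
  set (b := (1 + F x0 / G x0) / 2).
  assert (Hr : 1 < F x0 / G x0) by (apply Rmult_lt_reg_r with (r := G x0); auto; unfold Rdiv; rewrite Rmult_assoc, Rinv_l; lra).
  assert (Hb1 : 1 < b) by (unfold b; lra).
  assert (Hbx : 0 < F x0 - b * G x0).
  { assert (b < F x0 / G x0) by (unfold b; lra).
    apply Rmult_lt_compat_r with (r := G x0) in H; auto. unfold Rdiv in H. rewrite Rmult_assoc, Rinv_l in H; lra. }
  destruct (Fc x0 ltac:(lra) (F x0 - b * G x0) Hbx) as [d [Hd Hd']].
  set (th := Rmin (d/2) ((1 - x0)/2)).
  assert (Hth : 0 < th) by (apply Rmin_pos; lra).
  pose proof (Rmin_l (d/2) ((1 - x0)/2)). pose proof (Rmin_r (d/2) ((1 - x0)/2)). fold th in H, H0.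
  set (a := 1 + th).
  assert (Ha : 1 < a) by (unfold a; lra).
  assert (Hax : a * x0 < 1) by (unfold a; nra).
  assert (HFa : 0 < F (a * x0) - b * G x0).
  { specialize (Hd' (a * x0) ltac:(split; nra)). 
    assert (Rabs (a * x0 - x0) < d) by (unfold a; rewrite Rabs_right; nra).
    specialize (Hd' H1). apply Rabs_def2 in Hd'. lra. }
  assert (HL : Rmin 1 (/a) = /a) by (apply Rmin_right; rewrite <- Rinv_1; left; apply Rinv_lt_contravar; lra).
  assert (Hia : 0 < /a < 1) by (split; [apply Rinv_0_lt_compat; lra| rewrite <- Rinv_1; apply Rinv_lt_contravar; lra]).
  assert (Hx0L : x0 < /a) by (apply Rmult_lt_reg_l with (r := a); [lra|]; rewrite Rinv_r; lra).
  set (D := Dl F G a b).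
  assert (HcD : contI D 0 (/a)) by (pose proof (contI_Delta F G a b HF HG ltac:(lra)) as Hc; rewrite HL in Hc; exact Hc).
  assert (HD0 : D 0 < 0) by (unfold D, Dl; rewrite Rmult_0_r; destruct HF as [_ [_ [_ [E _]]]]; destruct HG as [_ [_ [_ [E' _]]]]; rewrite E, E'; lra).
  assert (HDL : D (/a) < 0).
  { unfold D, Dl. rewrite Rinv_r by lra. destruct HF as [_ [_ [_ [_ E]]]]. rewrite E.
    specialize (Gp (/a) ltac:(lra)). nra. }
  destruct (near_start D 0 (/a) x0 HcD ltac:(lra) ltac:(lra) ltac:(lra)) as [y0 [Hy0 [Hy0' P0]]].
  destruct (near_end D 0 (/a) x0 HcD ltac:(lra) ltac:(lra) ltac:(lra)) as [y1 [Hy1 [Hy1' P1]]].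
  assert (D y0 < 0) by nra. assert (D y1 < 0) by nra.
  assert (D x0 > 0) by (unfold D, Dl; lra).
  destruct (KEY F G a b 2 (pt4 y0 x0 y1 y1) HF HG ltac:(lra) ltac:(lra)) as [c [Hc Hcc]].
  { apply ALT3. lra. lra. lra. rewrite HL; lra. change (D y0 * D x0 < 0); nra. change (D x0 * D y1 < 0); nra. }
  exists a, c. split; [lra| split; auto].
Qed.

Lemma int_le f g : inD f -> inD g -> (forall x, 0 <= x <= 1 -> g x <= f x) ->
  forall x, 0 <= x <= 1 -> Ge g x <= Ge f x.
Proof.
  intros Hf Hg Hle x Hx. unfold Ge. apply RInt_le; [lra| apply exR; auto| apply exR; auto|].
  intros t Ht. rewrite !fe_eq by lra. apply Hle; lra.
Qed.

Lemma dDe_eq f g a b x : inD f -> inD g -> 0 <= a * x <= 1 -> 0 <= x <= 1 ->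
  a * (- fe f (a*x) / int01 f) - b * (- fe g x / int01 g) =
  - (a / int01 f) * Dl f g a (b * int01 f / (a * int01 g)) x \/ a = 0.
Proof.
  intros Hf Hg H1 H2. destruct (Req_dec a 0); [right; auto| left].
  pose proof (int01_pos f Hf). pose proof (int01_pos g Hg).
  rewrite !fe_eq by auto. unfold Dl. field. split; lra.
Qed.

Lemma LE f g : inD f -> inD g -> (forall x, 0 <= x <= 1 -> g x <= f x) ->
  (forall a b, 0 < a -> 0 < b -> ~ chi_ge (Dl f g a b) 0 (Rmin 1 (/a)) 3) ->
  forall x, 0 <= x <= 1 -> Iop g x <= Iop f x.
Proof.
  intros Hf Hg Hle H3 x Hx. rewrite !Iop_eq by auto.
  pose proof (int01_pos f Hf) as HF. pose proof (int01_pos g Hg) as HG.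
  assert (HFG : int01 g <= int01 f) by (rewrite !int01_eq; apply int_le; auto; lra).
  apply Rnot_lt_le. intro Hlt.
  destruct (Rle_lt_or_eq _ _ HFG) as [HFG'|HFG'].
  2: { unfold Ie in Hlt. rewrite HFG' in Hlt. pose proof (int_le f g Hf Hg Hle x Hx).
       assert (Ge f x / int01 f < Ge g x / int01 f) by lra.
       apply Rmult_lt_reg_r in H0; [lra| apply Rinv_0_lt_compat; auto]. }
  set (beta := int01 f / int01 g).
  assert (Hbeta : 1 < beta) by (unfold beta; apply Rmult_lt_reg_r with (r := int01 g); auto; unfold Rdiv; rewrite Rmult_assoc, Rinv_l; lra).
  assert (Ebeta : 1 * int01 f / (1 * int01 g) = beta) by (unfold beta; field; lra).
  destruct (Iop_inD f Hf) as [_ [_ [_ [E0f E1f]]]]. destruct (Iop_inD g Hg) as [_ [_ [_ [E0g E1g]]]].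
  rewrite !Iop_eq in E0f, E1f, E0g, E1g by lra.
  set (Psi := De f g 1 1).
  assert (HPsi : forall y, Psi y = Ie f y - Ie g y) by (intros; unfold Psi, De; rewrite Rmult_1_l; ring).
  assert (Hx01 : 0 < x < 1).
  { split; destruct (Rle_lt_or_eq _ _ (proj1 Hx)) as [Q|Q]; auto; try (subst; lra);
    destruct (Rle_lt_or_eq _ _ (proj2 Hx)) as [Q'|Q']; auto; subst; lra. }
  set (dPsi := fun y => 1 * (- fe f (1*y) / int01 f) - 1 * (- fe g y / int01 g)).
  assert (HdPsi : forall y, 0 <= y <= 1 -> dPsi y = - (1 / int01 f) * Dl f g 1 beta y).
  { intros y Hy. unfold dPsi. destruct (dDe_eq f g 1 1 y Hf Hg ltac:(rewrite Rmult_1_l; lra) Hy) as [E|E]; [|lra].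
    rewrite E, Ebeta. reflexivity. }
  set (delta := Dl f g 1 beta).
  destruct (MVT_gen Psi 0 x dPsi) as [c1 [Hc1 Hc1']].
  { intros; apply De_deriv; auto. } { intros; apply De_cont; auto. }
  destruct (MVT_gen Psi x 1 dPsi) as [c2 [Hc2 Hc2']].
  { intros; apply De_deriv; auto. } { intros; apply De_cont; auto. }
  rewrite Rmin_left in Hc1, Hc2 by lra. rewrite Rmax_right in Hc1, Hc2 by lra.
  rewrite !HPsi in Hc1', Hc2'. rewrite HdPsi in Hc1', Hc2' by lra.
  fold delta in Hc1', Hc2'.
  assert (Hpos1 : 0 < 1 / int01 f) by (apply Rdiv_lt_0_compat; lra).
  assert (D1 : 0 < delta c1).
  { rewrite E0f, E0g in Hc1'.
    destruct (Rlt_le_dec 0 (delta c1)); auto. exfalso.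
    assert (0 <= - (1 / int01 f) * delta c1 * (x - 0)) by (apply Rmult_le_pos; [nra| lra]). lra. }
  assert (D2 : delta c2 < 0).
  { rewrite E1f, E1g in Hc2'.
    destruct (Rlt_le_dec (delta c2) 0); auto. exfalso.
    assert (- (1 / int01 f) * delta c2 * (1 - x) <= 0).
    { assert (- (1 / int01 f) * delta c2 <= 0) by nra. nra. }
    lra. }
  destruct (inD_facts f Hf) as [Fc [Fb [Fm Fp]]]. destruct (inD_facts g Hg) as [Gc [Gb [Gm Gp]]].
  assert (Hd0 : delta 0 < 0).
  { unfold delta, Dl. rewrite Rmult_0_r. destruct Hf as [_ [_ [_ [E _]]]]. destruct Hg as [_ [_ [_ [E' _]]]]. rewrite E, E'. lra. }
  assert (Hd1 : delta 1 = 0).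
  { unfold delta, Dl. rewrite Rmult_1_r. destruct Hf as [_ [_ [_ [_ E]]]]. destruct Hg as [_ [_ [_ [_ E']]]]. rewrite E, E'. lra. }
  assert (Hc1pos : 0 < c1) by (destruct (Rle_lt_or_eq _ _ (proj1 Hc1)); auto; subst; lra).
  assert (Hc2lt : c2 < 1) by (destruct (Rle_lt_or_eq _ _ (proj2 Hc2)); auto; subst; lra).
  assert (Hc12 : c1 < c2) by (destruct (Rle_lt_or_eq c1 c2 ltac:(lra)); auto; subst; lra).
  assert (Hcd : contI delta 0 1).
  { pose proof (contI_Delta f g 1 beta Hf Hg ltac:(lra)). rewrite Rinv_1, Rmin_left in H by lra. exact H. }
  destruct (near_start delta 0 1 c1 Hcd ltac:(lra) Hc1pos ltac:(lra)) as [c0 [Hc0 [_ P0]]].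
  assert (D0 : delta c0 < 0) by nra.
  set (pt := pt4 c0 c1 c2 c2).
  destruct (perturb f g beta 2 pt Fc) as [eta [He Hp]].
  { intros i Hi. destruct i as [|[|[|i]]]; simpl; lra. }
  { intros i Hi. destruct i as [|[|[|i]]]; simpl; fold delta; lra. }
  set (a' := 1 - Rmin (eta/2) (1/2)).
  pose proof (Rmin_l (eta/2) (1/2)). pose proof (Rmin_r (eta/2) (1/2)).
  assert (0 < Rmin (eta/2) (1/2)) by (apply Rmin_pos; lra).
  assert (Ha' : 0 < a' < 1) by (unfold a'; lra).
  assert (Habs : Rabs (a' - 1) < eta) by (unfold a'; rewrite Rabs_left; lra).
  specialize (Hp a' Habs).
  assert (Hle' : forall i, (i <= 2)%nat -> a' * pt i <= 1).
  { intros i Hi. destruct i as [|[|[|i]]]; simpl; nra. }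
  specialize (Hp Hle').
  set (D' := Dl f g a' beta).
  pose proof (Hp O ltac:(lia)) as Q0. pose proof (Hp 1%nat ltac:(lia)) as Q1. pose proof (Hp 2%nat ltac:(lia)) as Q2.
  simpl in Q0, Q1, Q2. fold D' delta in Q0, Q1, Q2.
  assert (D'0 : D' c0 < 0) by nra. assert (D'1 : 0 < D' c1) by nra. assert (D'2 : D' c2 < 0) by nra.
  assert (HL' : Rmin 1 (/a') = 1) by (apply Rmin_left; rewrite <- Rinv_1; left; apply Rinv_lt_contravar; lra).
  assert (HcD' : contI D' 0 1).
  { pose proof (contI_Delta f g a' beta Hf Hg ltac:(lra)). rewrite HL' in H2. exact H2. }
  assert (HD'1 : 0 < D' 1).
  { unfold D', Dl. rewrite Rmult_1_r. destruct Hg as [_ [_ [_ [_ E]]]]. rewrite E. specialize (Fp a' ltac:(lra)). lra. }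
  destruct (near_end D' 0 1 c2 HcD' ltac:(lra) ltac:(lra) ltac:(lra)) as [y [Hy [_ Py]]].
  assert (D'y : 0 < D' y) by nra.
  destruct (KEY f g a' beta 3 (pt4 c0 c1 c2 y) Hf Hg ltac:(lra) ltac:(lra)) as [c [Hc Hcc]].
  { apply ALT4; try lra.
    change (D' c0 * D' c1 < 0); nra. change (D' c1 * D' c2 < 0); nra. change (D' c2 * D' y < 0); nra. }
  apply (H3 a' c); auto; lra.
Qed.

Lemma EXT (D : R -> R) L pt : contI D 0 L -> 0 < L -> D 0 * D L < 0 -> ALT D L 2 pt ->
  exists pt', ALT D L 3 pt'.
Proof.
  intros Hc HL Hend [H0 [Hk [Hinc Halt]]].
  pose proof (Hinc O ltac:(lia)). pose proof (Hinc 1%nat ltac:(lia)).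
  pose proof (Halt O ltac:(lia)) as A0. pose proof (Halt 1%nat ltac:(lia)) as A1.
  assert (N0 : D 0 <> 0) by (intro E; rewrite E in Hend; lra).
  assert (NL : D L <> 0) by (intro E; rewrite E in Hend; lra).
  destruct (Rlt_le_dec (D (pt O) * D 0) 0) as [Q|Q].
  - destruct (near_start D 0 L (pt O) Hc HL H0 N0) as [y [Hy [HyL P]]].
    exists (pt4 y (pt O) (pt 1%nat) (pt 2%nat)).
    apply ALT4; [lra|lra|lra|lra|lra| |exact A0|exact A1].
    apply (sgn_chain _ (D 0)); [exact P| rewrite Rmult_comm; exact Q].
  - assert (Q' : 0 < D (pt O) * D 0).
    { destruct (Rle_lt_or_eq _ _ Q) as [Q1|Q1]; auto. symmetry in Q1. apply Rmult_integral in Q1. destruct Q1 as [Q1|Q1]; [rewrite Q1 in A0; lra| tauto]. }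
    assert (Q2 : 0 < D (pt 2%nat) * D 0).
    { assert (0 < D (pt O) * D (pt 2%nat)).
      { assert (E : (D (pt O) * D (pt 1%nat)) * (D (pt 1%nat) * D (pt 2%nat)) = (D (pt O) * D (pt 2%nat)) * (D (pt 1%nat) * D (pt 1%nat))) by ring.
        assert (0 < (D (pt O) * D (pt 1%nat)) * (D (pt 1%nat) * D (pt 2%nat))) by nra.
        destruct (Rlt_le_dec 0 (D (pt O) * D (pt 2%nat))); auto. nra. }
      apply (sgn_pos_chain _ (D (pt O))); auto. rewrite Rmult_comm; auto. }
    assert (Q3 : D (pt 2%nat) * D L < 0) by (apply (sgn_chain _ (D 0)); auto).
    destruct (near_end D 0 L (pt 2%nat) Hc HL Hk NL) as [y [Hy [Hy0 P]]].
    exists (pt4 (pt O) (pt 1%nat) (pt 2%nat) y).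
    apply ALT4; [lra|lra|lra|lra|lra|exact A0|exact A1|].
    rewrite Rmult_comm. apply (sgn_chain _ (D L)); [exact P| rewrite Rmult_comm; exact Q3].
Qed.

Lemma FF f a b : inD f -> 0 < a -> 0 < b -> chi_ge (Dl f f a b) 0 (Rmin 1 (/a)) 2 ->
  exists c, 0 < c /\ chi_ge (Dl f f a c) 0 (Rmin 1 (/a)) 3.
Proof.
  intros Hf Ha Hb H2.
  destruct (chi2_ALT _ _ H2) as [pt Hpt].
  destruct (inD_facts f Hf) as [Fc [Fb [Fm Fp]]].
  pose proof Hf as Hf'. destruct Hf' as [_ [_ [Fs [F0 F1]]]].
  destruct (L_props a Ha) as [HL0 [HL1 HaL]].
  set (L := Rmin 1 (/a)) in *.
  set (D := Dl f f a b).
  destruct Hpt as [H0 [Hk [Hinc Halt]]] eqn:EH.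
  assert (Hin : forall i, (i <= 2)%nat -> 0 < pt i < L).
  { intros i Hi. split. pose proof (chain_le pt 2 Hinc O i ltac:(lia)); lra. pose proof (chain_le pt 2 Hinc i 2 ltac:(lia)); lra. }
  pose proof (Halt O ltac:(lia)) as A0. fold D in A0.
  destruct (Hin O ltac:(lia)) as [P0a P0b]. destruct (Hin 1%nat ltac:(lia)) as [P1a P1b].
  assert (HaxL : forall x, 0 <= x <= L -> 0 <= a * x <= 1).
  { intros x Hx. split. apply Rmult_le_pos; lra. assert (a * x <= a * L) by (apply Rmult_le_compat_l; lra). lra. }
  destruct (Rtotal_order a 1) as [Hlt|[Heq|Hgt]].
  -
    assert (HLe : L = 1) by (unfold L; apply Rmin_left; rewrite <- Rinv_1; left; apply Rinv_lt_contravar; lra).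
    destruct (Rle_lt_dec b 1) as [Hb1|Hb1].
    + exfalso.
      assert (forall x, 0 < x < 1 -> 0 < D x).
      { intros x Hx. unfold D, Dl. assert (f x < f (a * x)) by (apply Fs; nra). specialize (Fb x ltac:(lra)). nra. }
      pose proof (H (pt O) ltac:(lra)). pose proof (H (pt 1%nat) ltac:(lra)). nra.
    + assert (E : exists pt', ALT D L 3 pt').
      { apply (EXT D L pt); auto. apply contI_Delta; auto.
        unfold D, Dl. rewrite HLe, Rmult_0_r, Rmult_1_r, F0, F1.
        specialize (Fp a ltac:(lra)). nra. }
      destruct E as [pt' Hpt']. apply (KEY f f a b 3 pt'); auto.
  - exfalso. subst a. unfold D, Dl in A0. rewrite !Rmult_1_l in A0.
    assert (0 <= (f (pt O) - b * f (pt O)) * (f (pt 1%nat) - b * f (pt 1%nat))).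
    { replace ((f (pt O) - b * f (pt O)) * (f (pt 1%nat) - b * f (pt 1%nat))) with
        ((1 - b) * (1 - b) * (f (pt O) * f (pt 1%nat))) by ring.
      assert (Q0 : 0 <= pt O <= 1) by (split; [left; exact P0a| left; eapply Rlt_le_trans; [exact P0b| exact HL1]]).
      assert (Q1 : 0 <= pt 1%nat <= 1) by (split; [left; exact P1a| left; eapply Rlt_le_trans; [exact P1b| exact HL1]]).
      destruct (Fb (pt O) Q0). destruct (Fb (pt 1%nat) Q1).
      apply Rmult_le_pos. pose proof (Rle_0_sqr (1-b)) as Sq; unfold Rsqr in Sq; lra. apply Rmult_le_pos; lra. }
    lra.
  - assert (HLe : L = /a) by (unfold L; apply Rmin_right; rewrite <- Rinv_1; left; apply Rinv_lt_contravar; lra).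
    destruct (Rle_lt_dec 1 b) as [Hb1|Hb1].
    + exfalso.
      assert (forall x, 0 < x < L -> D x < 0).
      { intros x Hx. unfold D, Dl. rewrite HLe in Hx.
        assert (a * x < 1) by (apply Rmult_lt_reg_l with (r := /a); [apply Rinv_0_lt_compat; lra|]; rewrite <- Rmult_assoc, Rinv_l, Rmult_1_l, Rmult_1_r; lra).
        assert (f (a * x) < f x) by (apply Fs; nra).
        assert (0 < /a <= 1) by (split; [apply Rinv_0_lt_compat; lra| rewrite <- HLe; lra]).
        specialize (Fb x ltac:(lra)). nra. }
      pose proof (H (pt O) ltac:(lra)). pose proof (H (pt 1%nat) ltac:(lra)). nra.
    + assert (E : exists pt', ALT D L 3 pt').
      { apply (EXT D L pt); auto. apply contI_Delta; auto.
        assert (0 < /a < 1) by (split; [apply Rinv_0_lt_compat; lra| rewrite <- Rinv_1; apply Rinv_lt_contravar; lra]).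
        unfold D, Dl. rewrite HLe, Rmult_0_r, Rinv_r, F0, F1 by lra.
        specialize (Fp (/a) ltac:(lra)). assert (0 < b * f (/a)) by (apply Rmult_lt_0_compat; lra). nra. }
      destruct E as [pt' Hpt']. apply (KEY f f a b 3 pt'); auto.
Qed.

Lemma NE f g : inD f -> inD g -> (forall x, 0 <= x <= 1 -> Iop g x <= Iop f x) ->
  (exists x1, 0 < x1 < 1 /\ g x1 < f x1) -> exists x0, 0 < x0 < 1 /\ Iop g x0 < Iop f x0.
Proof.
  intros Hf Hg Hle [x1 [Hx1 Hlt]]. apply NNPP; intro Hn.
  assert (Heq : forall x, 0 < x < 1 -> Ie f x = Ie g x).
  { intros x Hx. rewrite <- !Iop_eq by lra. pose proof (Hle x ltac:(lra)).
    destruct (Rle_lt_or_eq _ _ H); auto. exfalso; apply Hn; exists x; split; auto. }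
  pose proof (int01_pos f Hf) as HF. pose proof (int01_pos g Hg) as HG.
  set (beta := 1 * int01 f / (1 * int01 g)).
  set (delta := Dl f g 1 beta).
  assert (Hz : forall x, 0 < x < 1 -> delta x = 0).
  { intros x Hx. set (Psi := De f g 1 1).
    pose proof (De_deriv f g 1 1 x Hf Hg) as Hd.
    assert (Hd0 : is_derive Psi x 0).
    { apply (is_derive_ext_loc (fun _ => 0)).
      - apply (locally_interval _ x (Finite 0) (Finite 1)); simpl; try lra.
        intros y Hy0 Hy1. unfold Psi, De. rewrite Rmult_1_l, Heq by lra. ring.
      - apply (@is_derive_const R_AbsRing R_NormedModule). }
    apply is_derive_unique in Hd. apply is_derive_unique in Hd0. fold Psi in Hd. rewrite Hd0 in Hd.
    destruct (dDe_eq f g 1 1 x Hf Hg ltac:(rewrite Rmult_1_l; lra) ltac:(lra)) as [E|E]; [|lra].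
    rewrite E in Hd. fold beta delta in Hd.
    assert (0 < 1 / int01 f) by (apply Rdiv_lt_0_compat; lra). nra. }
  assert (Hb1 : beta = 1).
  { apply NNPP; intro Hb.
    assert (Hcd : contI delta 0 1).
    { pose proof (contI_Delta f g 1 beta Hf Hg ltac:(lra)). rewrite Rinv_1, Rmin_left in H by lra. exact H. }
    assert (delta 0 <> 0).
    { unfold delta, Dl. rewrite Rmult_0_r. destruct Hf as [_ [_ [_ [E _]]]]. destruct Hg as [_ [_ [_ [E' _]]]]. rewrite E, E'. lra. }
    destruct (near_start delta 0 1 (1/2) Hcd ltac:(lra) ltac:(lra) H) as [y [Hy [_ P]]].
    rewrite Hz in P by lra. lra. }
  specialize (Hz x1 Hx1). unfold delta, Dl in Hz. rewrite Hb1, Rmult_1_l in Hz. lra.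
Qed.

Lemma Ipart f g : inD f -> inD g -> dominated g f -> dominated (Iop g) (Iop f).
Proof.
  intros Hf Hg [Hcr Hle]. apply crossing_char in Hcr. destruct Hcr as [H3 [a [b [Ha [Hb H2]]]]].
  assert (Hx1 : exists x1, 0 < x1 < 1 /\ g x1 < f x1).
  { apply NNPP; intro Hn.
    assert (E : forall x, 0 <= x <= 1 -> g x = f x).
    { intros x Hx. destruct (Req_dec x 0). subst. destruct Hf as [_ [_ [_ [E _]]]]. destruct Hg as [_ [_ [_ [E' _]]]]. lra.
      destruct (Req_dec x 1). subst. destruct Hf as [_ [_ [_ [_ E]]]]. destruct Hg as [_ [_ [_ [_ E']]]]. lra.
      pose proof (Hle x Hx). destruct (Rle_lt_or_eq _ _ H1); auto. exfalso; apply Hn; exists x; split; auto; lra. }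
    destruct (L_props a Ha) as [HL0 [HL1 HaL]].
    assert (Ext : forall c x, 0 <= x <= Rmin 1 (/a) -> Dl f g a c x = Dl f f a c x).
    { intros c x Hx. unfold Dl. rewrite E by lra. auto. }
    apply (chi_ge_ext _ (Dl f f a b)) in H2; [|intros; apply Ext; auto].
    destruct (FF f a b Hf Ha Hb H2) as [c [Hc Hcc]].
    apply (H3 a c Ha Hc). apply (chi_ge_ext (Dl f f a c)); auto. intros; symmetry; apply Ext; auto. }
  pose proof (LE f g Hf Hg Hle H3) as HLE.
  destruct (NE f g Hf Hg HLE Hx1) as [x0 [Hx0 Hlt]].
  split; auto.
  apply crossing_char. split.
  - apply UB; auto.
  - apply (LB (Iop f) (Iop g) x0); auto; apply Iop_inD; auto.
Qed.

Lemma contI_const (k l r : R) : contI (fun _ => k) l r.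
Proof. intros x Hx eps He. exists 1. split; [lra|]. intros. rewrite Rminus_eq_0, Rabs_R0. auto. Qed.

Lemma inD_strict f x y : inD f -> 0 <= x -> x < y -> y <= 1 -> f y < f x.
Proof. intros [_ [_ [H _]]]; apply H. Qed.

Lemma inD_inj f x y : inD f -> 0 <= x <= 1 -> 0 <= y <= 1 -> f x = f y -> x = y.
Proof.
  intros Hf Hx Hy E. destruct (Rtotal_order x y) as [H|[H|H]]; auto.
  - pose proof (inD_strict f x y Hf ltac:(lra) H ltac:(lra)). lra.
  - pose proof (inD_strict f y x Hf ltac:(lra) H ltac:(lra)). lra.
Qed.

Lemma finv_ex f y : inD f -> 0 <= y <= 1 -> exists x, 0 <= x <= 1 /\ f x = y.
Proof.
  intros Hf Hy. pose proof Hf as [Hc [Hb [Hs [H0 H1]]]].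
  destruct (Req_dec y 1). { exists 0. split; [lra| congruence]. }
  destruct (Req_dec y 0). { exists 1. split; [lra| congruence]. }
  destruct (ivt_down (fun x => f x - y * 1) 0 1 ltac:(lra)) as [x [Hx Hx']].
  - apply contI_lin; auto. apply contI_const.
  - rewrite H0; lra.
  - rewrite H1; lra.
  - exists x. split; [lra|lra].
Qed.

Lemma finv_spec f y : inD f -> 0 <= y <= 1 -> 0 <= finv f y <= 1 /\ f (finv f y) = y.
Proof.
  intros Hf Hy. unfold finv. apply (epsilon_spec (inhabits 0) (fun x => 0 <= x <= 1 /\ f x = y)).
  apply finv_ex; auto.
Qed.

Lemma finv_f f x : inD f -> 0 <= x <= 1 -> finv f (f x) = x.
Proof.
  intros Hf Hx. pose proof Hf as [Hc [Hb Hr]]. destruct (finv_spec f (f x) Hf (Hb x Hx)) as [H1 H2].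
  apply (inD_inj f); auto.
Qed.

Lemma finv_inD f : inD f -> inD (finv f).
Proof.
  intros Hf. pose proof Hf as [Hc [Hb [Hs [H0 H1]]]].
  assert (Hsp := finv_spec f). 
  assert (Hdec : forall y y', 0 <= y -> y < y' -> y' <= 1 -> finv f y' < finv f y).
  { intros y y' Hy Hyy Hy'. destruct (Hsp y Hf ltac:(lra)) as [A1 A2]. destruct (Hsp y' Hf ltac:(lra)) as [B1 B2].
    destruct (Rlt_le_dec (finv f y') (finv f y)); auto. exfalso.
    destruct (Rle_lt_or_eq _ _ r).
    - pose proof (Hs (finv f y) (finv f y') ltac:(lra) H ltac:(lra)). lra.
    - rewrite H in A2. lra. }
  split; [|split; [|split; [|split]]].
  - intros y Hy eps He. destruct (Hsp y Hf Hy) as [[Hx0 Hx1] Hfx]. set (x := finv f y) in *.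
    assert (HL : exists dl, 0 < dl /\ forall y', 0 <= y' <= 1 -> y' < y + dl -> x - eps < finv f y').
    { destruct (Rlt_le_dec (x - eps) 0).
      - exists 1. split; [lra|]. intros y' Hy' _. destruct (Hsp y' Hf Hy'). lra.
      - exists (f (x - eps/2) - y). split.
        + rewrite <- Hfx. pose proof (Hs (x - eps/2) x ltac:(lra) ltac:(lra) ltac:(lra)). lra.
        + intros y' Hy' Hlt. destruct (Hsp y' Hf Hy') as [C1 C2].
          destruct (Rlt_le_dec (x - eps) (finv f y')); auto. exfalso.
          pose proof (Hs (finv f y') (x - eps/2) ltac:(lra) ltac:(lra) ltac:(lra)). lra. }
    assert (HR : exists dr, 0 < dr /\ forall y', 0 <= y' <= 1 -> y - dr < y' -> finv f y' < x + eps).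
    { destruct (Rlt_le_dec 1 (x + eps)).
      - exists 1. split; [lra|]. intros y' Hy' _. destruct (Hsp y' Hf Hy'). lra.
      - exists (y - f (x + eps/2)). split.
        + rewrite <- Hfx. pose proof (Hs x (x + eps/2) ltac:(lra) ltac:(lra) ltac:(lra)). lra.
        + intros y' Hy' Hlt. destruct (Hsp y' Hf Hy') as [C1 C2].
          destruct (Rlt_le_dec (finv f y') (x + eps)); auto. exfalso.
          pose proof (Hs (x + eps/2) (finv f y') ltac:(lra) ltac:(lra) ltac:(lra)). lra. }
    destruct HL as [dl [Hdl HL]]. destruct HR as [dr [Hdr HR]].
    exists (Rmin dl dr). split. apply Rmin_pos; auto.
    intros y' Hy' Hd. pose proof (Rmin_l dl dr). pose proof (Rmin_r dl dr).
    apply Rabs_def2 in Hd. specialize (HL y' Hy' ltac:(lra)). specialize (HR y' Hy' ltac:(lra)).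
    apply Rabs_def1; lra.
  - intros y Hy. apply Hsp; auto.
  - intros; apply Hdec; auto.
  - rewrite <- H1. apply finv_f; auto. lra.
  - rewrite <- H0. apply finv_f; auto. lra.
Qed.

Lemma finv_le f g : inD f -> inD g -> (forall x, 0 <= x <= 1 -> g x <= f x) ->
  forall y, 0 <= y <= 1 -> finv g y <= finv f y.
Proof.
  intros Hf Hg Hle y Hy. destruct (finv_spec g y Hg Hy) as [A1 A2]. destruct (finv_spec f y Hf Hy) as [B1 B2].
  destruct (Rle_lt_dec (finv g y) (finv f y)); auto. exfalso.
  pose proof (inD_strict f (finv f y) (finv g y) Hf ltac:(lra) r ltac:(lra)).
  pose proof (Hle (finv g y) A1). lra.
Qed.

Lemma finv_inv f y : inD f -> 0 <= y <= 1 -> finv (finv f) y = f y.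
Proof.
  intros Hf Hy. pose proof (finv_inD f Hf) as Hi. pose proof Hf as [Hc [Hb _]].
  rewrite <- (finv_f f y Hf Hy) at 1. apply finv_f; auto.
Qed.

Lemma const_sign (phi : R -> R) l r : contI phi l r -> (forall x, l <= x <= r -> phi x <> 0) ->
  forall x y, l <= x <= r -> l <= y <= r -> 0 < phi x * phi y.
Proof.
  intros Hc Hnz.
  assert (K : forall x y, l <= x <= r -> l <= y <= r -> x < y -> 0 < phi x * phi y).
  { intros x y Hx Hy Hxy. destruct (Rlt_le_dec 0 (phi x * phi y)) as [Q|Q]; auto. exfalso.
    pose proof (Hnz x Hx). pose proof (Hnz y Hy).
    assert (phi x * phi y < 0) by (destruct (Rle_lt_or_eq _ _ Q); auto; apply Rmult_integral in H1; tauto).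
    assert (Hc' : contI phi x y) by (eapply contI_sub; [exact Hc| lra| lra]).
    destruct (Rlt_le_dec 0 (phi x)).
    - assert (phi y < 0) by nra. destruct (ivt_down phi x y Hxy Hc' r0 H2) as [z [Hz Hz']].
      apply (Hnz z); auto; lra.
    - assert (phi x < 0) by lra. assert (0 < phi y) by nra.
      destruct (ivt_up phi x y Hxy Hc' H2 H3) as [z [Hz Hz']]. apply (Hnz z); auto; lra. }
  intros x y Hx Hy. destruct (Rtotal_order x y) as [H|[H|H]].
  - apply K; auto.
  - subst. pose proof (Hnz y Hy). destruct (Rlt_le_dec 0 (phi y)); nra.
  - rewrite Rmult_comm. apply K; auto.
Qed.

Lemma mk_switch2 (D : R -> R) c0 d0 c d del : c0 < c -> c <= d -> d < d0 ->
  (forall x, c <= x <= d -> D x = 0) -> 0 < del ->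
  (forall x, 0 < x <= del -> D (c - x) * D (d + x) < 0) -> sign_switch D c0 d0 c d.
Proof.
  intros H1 H2 H3 Hz Hd H. split; [lra|]. split; [lra|]. split; [lra|]. split; auto.
  exists (Rmin del (Rmin (c - c0) (d0 - d))). split.
  { apply Rmin_pos; auto. apply Rmin_pos; lra. }
  split. { apply Rmin_r. }
  intros x Hx. apply H. pose proof (Rmin_l del (Rmin (c - c0) (d0 - d))). lra.
Qed.

Lemma SR f g a b x : inD f -> inD g -> 0 <= x <= 1 -> 0 <= a * x <= 1 -> 0 <= b * g x <= 1 ->
  (0 < Dl f g a b x -> 0 < Dl (finv f) (finv g) b a (g x)) /\
  (Dl f g a b x < 0 -> Dl (finv f) (finv g) b a (g x) < 0) /\
  (Dl f g a b x = 0 -> Dl (finv f) (finv g) b a (g x) = 0).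
Proof.
  intros Hf Hg Hx Hax Hbg. unfold Dl. rewrite (finv_f g x Hg Hx).
  destruct (finv_spec f (b * g x) Hf Hbg) as [U1 U2]. set (u := finv f (b * g x)) in *.
  rewrite <- U2.
  split; [|split].
  - intros H. destruct (Rlt_le_dec (a * x) u); [lra|]. exfalso.
    destruct (Rle_lt_or_eq _ _ r). pose proof (inD_strict f u (a*x) Hf ltac:(lra) H0 ltac:(lra)). lra. rewrite H0 in H; lra.
  - intros H. destruct (Rlt_le_dec u (a * x)); [lra|]. exfalso.
    destruct (Rle_lt_or_eq _ _ r). pose proof (inD_strict f (a*x) u Hf ltac:(lra) H0 ltac:(lra)). lra. rewrite H0 in H; lra.
  - intros H. assert (a * x = u) by (apply (inD_inj f); auto; lra). lra.
Qed.

Lemma SM f g a b c d : inD f -> inD g -> 0 < a -> 0 < b ->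
  sign_switch (Dl f g a b) 0 (Rmin 1 (/a)) c d ->
  sign_switch (Dl (finv f) (finv g) b a) 0 (Rmin 1 (/b)) (g d) (g c).
Proof.
  intros Hf Hg Ha Hb [Hc0 [Hcd [HdL [HZ [del [Hdel [Hdel2 HP]]]]]]].
  destruct (L_props a Ha) as [HL0 [HL1 HaL]].
  set (La := Rmin 1 (/a)) in *.
  pose proof (Rmin_l c (La - d)). pose proof (Rmin_r c (La - d)).
  replace (c - 0) with c in Hdel2 by ring.
  destruct (inD_facts f Hf) as [Fc [Fb [Fm Fp]]]. destruct (inD_facts g Hg) as [Gc [Gb [Gm Gp]]].
  pose proof Hf as [_ [_ [Fs [F0 F1]]]]. pose proof Hg as [_ [_ [Gs [G0 G1]]]].
  set (D := Dl f g a b) in *. set (Ds := Dl (finv f) (finv g) b a).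
  assert (HaxL : forall x, 0 <= x <= La -> 0 <= a * x <= 1).
  { intros x Hx. split. apply Rmult_le_pos; lra. assert (a * x <= a * La) by (apply Rmult_le_compat_l; lra). lra. }
  assert (Zc : D c = 0) by (apply HZ; lra). assert (Zd : D d = 0) by (apply HZ; lra).
  assert (Ebc : b * g c = f (a * c)) by (unfold D, Dl in Zc; lra).
  assert (Ebd : b * g d = f (a * d)) by (unfold D, Dl in Zd; lra).
  assert (Hac : 0 < a * c) by nra.
  assert (Hbc1 : b * g c < 1) by (rewrite Ebc, <- F0; apply Fs; [lra| lra| apply HaxL; lra]).
  (* shrink so that b * g stays <= 1 left of c *)
  destruct (Gc c ltac:(lra) ((1 - b * g c)/b) ltac:(apply Rdiv_lt_0_compat; lra)) as [dg [Hdg Hdg']].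
  set (eta := Rmin del (dg/2)).
  assert (Heta : 0 < eta) by (apply Rmin_pos; lra).
  pose proof (Rmin_l del (dg/2)). pose proof (Rmin_r del (dg/2)). fold eta in H1, H2.
  assert (Hbg_left : forall x, c - eta <= x <= c -> b * g x <= 1).
  { intros x Hx. destruct (Req_dec x c). subst; lra.
    specialize (Hdg' x ltac:(lra) ltac:(rewrite Rabs_left by lra; lra)). apply Rabs_def2 in Hdg'.
    assert (g x < g c + (1 - b * g c) / b) by lra.
    apply Rmult_lt_compat_l with (r := b) in H4; auto.
    replace (b * (g c + (1 - b * g c) / b)) with 1 in H4 by (field; lra). lra. }
  assert (HcD : contI D 0 La) by (apply contI_Delta; auto).
  assert (Lnz : forall x, c - eta <= x < c -> D x <> 0).
  { intros x Hx E. specialize (HP (c - x) ltac:(lra)). replace (c - (c - x)) with x in HP by ring. rewrite E in HP. lra. }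
  assert (Lcs : forall t1 t2, 0 < t1 <= eta -> 0 < t2 <= eta -> 0 < D (c - t1) * D (c - t2)).
  { intros t1 t2 Ht1 Ht2.
    assert (0 < Rmin t1 t2) by (apply Rmin_pos; lra). pose proof (Rmin_l t1 t2). pose proof (Rmin_r t1 t2).
    apply (const_sign D (c - eta) (c - Rmin t1 t2)).
    - eapply contI_sub; [exact HcD| lra| lra].
    - intros x Hx. apply Lnz. lra.
    - lra.
    - lra. }
  set (ds := Rmin (g d - g (d + eta)) (g (c - eta) - g c)).
  assert (Hds : 0 < ds).
  { apply Rmin_pos. assert (g (d + eta) < g d) by (apply Gs; lra). lra.
    assert (g c < g (c - eta)) by (apply Gs; lra). lra. }
  pose proof (Rmin_l (g d - g (d + eta)) (g (c - eta) - g c)). pose proof (Rmin_r (g d - g (d + eta)) (g (c - eta) - g c)).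
  fold ds in H3, H4.
  assert (Hgd : 0 < g d) by (apply Gp; lra).
  assert (Hgc : g c < 1) by (rewrite <- G0; apply Gs; lra).
  assert (Hgcb : g c < / b).
  { apply Rmult_lt_reg_l with (r := b); auto. rewrite Rinv_r by lra. lra. }
  assert (Hgdc : g d <= g c) by (destruct (Rle_lt_or_eq _ _ Hcd); [left; apply Gs; lra| subst; lra]).
  assert (HgcL : g c < Rmin 1 (/b)) by (unfold Rmin; destruct Rle_dec; lra).
  assert (Pre : forall z, 0 <= z <= 1 -> 0 <= finv g z <= 1 /\ g (finv g z) = z) by (intros; apply finv_spec; auto).
  assert (Gmono : forall x y, 0 <= x <= 1 -> 0 <= y <= 1 -> g x <= g y -> y <= x).
  { intros x y Hx Hy Hxy. destruct (Rle_lt_dec y x); auto. pose proof (Gs x y ltac:(lra) r ltac:(lra)). lra. }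
  assert (Gmono' : forall x y, 0 <= x <= 1 -> 0 <= y <= 1 -> g x < g y -> y < x).
  { intros x y Hx Hy Hxy. destruct (Rlt_le_dec y x); auto. destruct (Rle_lt_or_eq _ _ r). pose proof (Gs x y ltac:(lra) H5 ltac:(lra)). lra. subst. lra. }
  apply (mk_switch2 Ds 0 (Rmin 1 (/b)) (g d) (g c) ds); auto.
  - intros z Hz. destruct (Pre z ltac:(split; lra)) as [[P1 P2] P3]. set (x := finv g z) in *.
    assert (Hxc : c <= x) by (apply Gmono; try lra; rewrite P3; lra).
    assert (Hxd : x <= d) by (apply Gmono; try lra; rewrite P3; lra).
    assert (Dx : D x = 0) by (apply HZ; lra).
    rewrite <- P3. apply (SR f g a b x Hf Hg); auto. apply HaxL; lra.
    unfold D, Dl in Dx. destruct (Fb (a * x) (HaxL x ltac:(lra))). lra.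
  - intros w Hw.
    assert (0 <= g (d + eta) <= 1) by (apply Gb; lra).
    assert (0 <= g (c - eta) <= 1) by (apply Gb; lra).
    set (z1 := g d - w). set (z2 := g c + w).
    destruct (Pre z1 ltac:(unfold z1; split; lra)) as [[Q1 Q2] Q3]. set (x1 := finv g z1) in *.
    destruct (Pre z2 ltac:(unfold z2; split; lra)) as [[R1 R2] R3]. set (x2 := finv g z2) in *.
    assert (X1a : d < x1) by (apply Gmono'; try lra; rewrite Q3; unfold z1; lra).
    assert (X1b : x1 <= d + eta) by (apply Gmono; try lra; rewrite Q3; unfold z1; lra).
    assert (X2a : x2 < c) by (apply Gmono'; try lra; rewrite R3; unfold z2; lra).
    assert (X2b : c - eta <= x2) by (apply Gmono; try lra; rewrite R3; unfold z2; lra).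
    assert (S12 : D x2 * D x1 < 0).
    { set (t1 := x1 - d). set (t2 := c - x2).
      replace x1 with (d + t1) by (unfold t1; ring). replace x2 with (c - t2) by (unfold t2; ring).
      apply (sgn_chain _ (D (c - t1))).
      - apply Lcs; unfold t1, t2; lra.
      - apply HP; unfold t1; lra. }
    change (Ds z1 * Ds z2 < 0). rewrite <- Q3, <- R3.
    assert (B1 : 0 <= b * g x1 <= 1).
    { split. apply Rmult_le_pos; [lra| apply Gb; lra]. rewrite Q3. unfold z1.
      destruct (Fb (a*d) (HaxL d ltac:(lra))). nra. }
    assert (B2 : 0 <= b * g x2 <= 1) by (split; [apply Rmult_le_pos; [lra| apply Gb; lra]| apply Hbg_left; lra]).
    pose proof (SR f g a b x1 Hf Hg ltac:(lra) (HaxL x1 ltac:(lra)) B1) as [S1 [S1' _]].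
    pose proof (SR f g a b x2 Hf Hg ltac:(lra) (HaxL x2 ltac:(lra)) B2) as [S2 [S2' _]].
    fold D Ds in S1, S1', S2, S2'.
    destruct (Rlt_le_dec 0 (D x2)) as [Q|Q].
    + assert (N1 : D x1 < 0) by nra. specialize (S2 Q). specialize (S1' N1). nra.
    + assert (N2 : D x2 < 0) by (destruct (Rle_lt_or_eq _ _ Q) as [Q'|Q']; auto; rewrite Q' in S12; lra).
      assert (N1 : 0 < D x1) by nra. specialize (S2' N2). specialize (S1 N1). nra.
Qed.

Lemma CT f g a b k : inD f -> inD g -> 0 < a -> 0 < b ->
  chi_ge (Dl f g a b) 0 (Rmin 1 (/a)) k -> chi_ge (Dl (finv f) (finv g) b a) 0 (Rmin 1 (/b)) k.
Proof.
  intros Hf Hg Ha Hb [l [Hnd [Hlen HF]]].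
  destruct (L_props a Ha) as [HL0 [HL1 HaL]].
  exists (map (fun p => (g (snd p), g (fst p))) l). split; [|split].
  - apply NoDup_map_NoDup_ForallPairs; auto.
    intros [c d] [c' d'] Hp Hq E. simpl in E. injection E as E1 E2.
    rewrite List.Forall_forall in HF. pose proof (HF _ Hp) as S1. pose proof (HF _ Hq) as S2. simpl in S1, S2.
    destruct S1 as [A1 [A2 [A3 _]]]. destruct S2 as [B1 [B2 [B3 _]]].
    f_equal; apply (inD_inj g); auto; lra.
  - rewrite length_map; auto.
  - rewrite List.Forall_forall in *. intros [x y] Hxy. apply in_map_iff in Hxy. destruct Hxy as [[c d] [E Hin]].
    simpl in E. injection E as E1 E2. subst. simpl. apply SM; auto. apply (HF _ Hin).
Qed.

Lemma Tpart_dom f g : inD f -> inD g -> dominated g f -> dominated (finv g) (finv f).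
Proof.
  intros Hf Hg [Hcr Hle]. apply crossing_char in Hcr. destruct Hcr as [H3 [a [b [Ha [Hb H2]]]]].
  pose proof (finv_inD f Hf) as Hf'. pose proof (finv_inD g Hg) as Hg'.
  split.
  - apply crossing_char. split.
    + intros a' b' Ha' Hb' Hc. apply (CT (finv f) (finv g) a' b' 3 Hf' Hg' Ha' Hb') in Hc.
      apply (H3 b' a' Hb' Ha'). eapply chi_ge_ext; [|exact Hc].
      intros x Hx. destruct (L_props b' Hb') as [HL0 [HL1 HaL]].
      assert (b' * x <= b' * Rmin 1 (/b')) by (apply Rmult_le_compat_l; lra).
      assert (0 <= b' * x) by (apply Rmult_le_pos; lra).
      unfold Dl. rewrite (finv_inv f (b' * x)) by (auto; lra). rewrite (finv_inv g x) by (auto; lra). reflexivity.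
    + exists b, a. split; auto. split; auto. apply CT; auto.
  - apply finv_le; auto.
Qed.

Theorem theorem3p4 (f g : R -> R) :
  inD f -> inD g -> dominated g f ->
  dominated (Iop g) (Iop f) /\ dominated (Top g) (Top f).
Proof.
  intros Hf Hg Hd. split.
  - apply Ipart; auto.
  - unfold Top. apply Ipart. apply finv_inD; auto. apply finv_inD; auto. apply Tpart_dom; auto.
Qed.
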